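(* For $a=1$ one has $\rho_1(s)=\frac{\pi}{2}-2\arctan e^{-s}$ and $t_1(s)=\log\cosh s$ for all $s\in\mathbb{R}$, so $\rho_1$ takes values in $]-\pi/2,\pi/2[$ and the curve $\alpha_1$ is the graph $t=-\log\cos\rho$, $\rho\in\,]-\pi/2,\pi/2[$; it is a complete, open, embedded curve invariant under $(\rho,t)\mapsto(-\rho,t)$. The rotational surface $S(1)$ it generates is a complete, properly embedded, analytic, totally umbilic surface in $\mathbb{S}^2\times\mathbb{R}$ homeomorphic to $\mathbb{R}^2$.
   Context: $\mathbb{S}^2\times\mathbb{R}$ carries the product metric of the unit round sphere and the line. Fix a point $p\in\mathbb{S}^2$ and a unit-speed great circle $\gamma:\mathbb{R}\to\mathbb{S}^2$ with $\gamma(0)=p$; let $\Gamma=\gamma(\mathbb{R})$. On the totally geodesic cylinder $\Gamma\times\mathbb{R}$ use coordinates $(\rho,t)$, $\rho\in\mathbb{R}/2\pi\mathbb{Z}$, for the point $(\gamma(\rho),t)$; the induced metric is $d\rho^2+dt^2$. For a curve $\alpha$ in $\Gamma\times\mathbb{R}$, the rotational surface generated by $\alpha$ is the union of the images of $\alpha$ under the isometries $(q,t)\mapsto(R(q),t)$, $R$ ranging over the rotations of $\mathbb{S}^2$ fixing $p$. For $a>0$ let $\rho_a:\mathbb{R}\to\mathbb{R}$ be the solution of $\rho''=-a^2\sin\rho\cos\rho$, $\rho(0)=0$, $\rho'(0)=1$, let $t_a(s)=\int_0^s a\sin\rho_a(u)\,du$, let $\alpha_a(s)=(\rho_a(s)\bmod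 2\pi,\,t_a(s))$, and let $S(a)$ be the rotational surface generated by $\alpha_a$. Totally umbilic: the shape operator is at each point a multiple of the identity. *)

(* Defs.v *)
From Stdlib Require Import Reals.
From Coquelicot Require Import Coquelicot.
Open Scope R_scope.

Definition V3 := (R * R * R)%type.
Definition dot3 (a b : V3) : R :=
  let '(a1, a2, a3) := a in let '(b1, b2, b3) := b in a1 * b1 + a2 * b2 + a3 * b3.
Definition add3 (a b : V3) : V3 :=
  let '(a1, a2, a3) := a in let '(b1, b2, b3) := b in (a1 + b1, a2 + b2, a3 + b3).
Definition scal3 (k : R) (a : V3) : V3 :=
  let '(a1, a2, a3) := a in (k * a1, k * a2, k * a3).
Definition cross3 (a b : V3) : V3 :=
  let '(a1, a2, a3) := a in let '(b1, b2, b3) := b in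
  (a2 * b3 - a3 * b2, a3 * b1 - a1 * b3, a1 * b2 - a2 * b1).
Definition triple3 (a b c : V3) : R := dot3 (cross3 a b) c.

Definition on_sphere (q : V3) : Prop := dot3 q q = 1.

Definition is_rotation (f : V3 -> V3) : Prop :=
  (forall (a b : R) (u v : V3),
      f (add3 (scal3 a u) (scal3 b v)) = add3 (scal3 a (f u)) (scal3 b (f v))) /\
  (forall u v : V3, dot3 (f u) (f v) = dot3 u v) /\
  triple3 (f (1, 0, 0)) (f (0, 1, 0)) (f (0, 0, 1)) = 1.

Definition rotation_fixing (p : V3) (f : V3 -> V3) : Prop := is_rotation f /\ f p = p.

Definition unit_speed_great_circle (g : R -> V3) : Prop :=
  exists c w : V3, on_sphere c /\ on_sphere w /\ dot3 c w = 0 /\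
    forall s, g s = add3 (scal3 (cos s) c) (scal3 (sin s) w).

Definition P4 := (V3 * R)%type.
Definition coord4 (i : nat) (x : P4) : R :=
  let '((x1, x2, x3), x4) := x in
  match i with 0%nat => x1 | 1%nat => x2 | 2%nat => x3 | _ => x4 end.
Definition dot4 (x y : P4) : R := dot3 (fst x) (fst y) + snd x * snd y.
Definition sub4 (x y : P4) : P4 := (add3 (fst x) (scal3 (-1) (fst y)), snd x - snd y).
Definition in_S2xR (x : P4) : Prop := on_sphere (fst x).

Definition seq_cv4 (x : nat -> P4) (l : P4) : Prop :=
  is_lim_seq (fun n => dot4 (sub4 (x n) l) (sub4 (x n) l)) 0.

Definition dvec (f : R -> P4) (s : R) : P4 :=
  ((Derive (fun w => coord4 0 (f w)) s, Derive (fun w => coord4 1 (f w)) s,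
    Derive (fun w => coord4 2 (f w)) s), Derive (fun w => coord4 3 (f w)) s).

Definition Xu (X : R -> R -> P4) (u v : R) : P4 := dvec (fun w => X w v) u.
Definition Xv (X : R -> R -> P4) (u v : R) : P4 := dvec (fun w => X u w) v.
Definition Xuu (X : R -> R -> P4) (u v : R) : P4 := dvec (fun w => Xu X w v) u.
Definition Xuv (X : R -> R -> P4) (u v : R) : P4 := dvec (fun w => Xu X u w) v.
Definition Xvv (X : R -> R -> P4) (u v : R) : P4 := dvec (fun w => Xv X u w) v.

Definition is_rho_sol (a : R) (rho : R -> R) : Prop :=
  (forall s, ex_derive rho s) /\
  (forall s, is_derive (Derive rho) s (- a ^ 2 * sin (rho s) * cos (rho s))) /\
  rho 0 = 0 /\ Derive rho 0 = 1.

Definition t_fun (a : R) (rho : R -> R) (s : R) : R :=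
  RInt (fun u => a * sin (rho u)) 0 s.

(** The curve alpha in the cylinder Gamma x R, realized in S^2 x R ⊂ R^4:
    the point with cylinder coordinates (rho, t) is (gamma(rho), t). *)
Definition cyl_curve (gam : R -> V3) (rho t : R -> R) (s : R) : P4 := (gam (rho s), t s).

Definition rotational_surface (p : V3) (gam : R -> V3) (rho t : R -> R) (x : P4) : Prop :=
  exists (f : V3 -> V3) (s : R), rotation_fixing p f /\ x = (f (gam (rho s)), t s).

Definition analytic2 (f : R -> R -> R) : Prop :=
  forall u0 v0 : R, exists (c : nat -> nat -> R) (r : R), 0 < r /\
    forall u v, Rabs (u - u0) < r -> Rabs (v - v0) < r ->
      (forall m, ex_series (fun n => Rabs (c m n * (u - u0) ^ m * (v - v0) ^ n))) /\
      ex_series (fun m => Series (fun n => Rabs (c m n * (u - u0) ^ m * (v - v0) ^ n))) /\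
      f u v = Series (fun m => Series (fun n => c m n * (u - u0) ^ m * (v - v0) ^ n)).

Definition analytic_param (X : R -> R -> P4) : Prop :=
  forall i : nat, (i < 4)%nat -> analytic2 (fun u v => coord4 i (X u v)).

Definition regular_param (X : R -> R -> P4) : Prop :=
  forall u v, dot4 (Xu X u v) (Xu X u v) * dot4 (Xv X u v) (Xv X u v)
              - (dot4 (Xu X u v) (Xv X u v)) ^ 2 > 0.

Definition homeo_onto (X : R -> R -> P4) (S : P4 -> Prop) : Prop :=
  (forall x, S x <-> exists u v, x = X u v) /\
  (forall u v u' v', X u v = X u' v' -> u = u' /\ v = v') /\
  (forall (un vn : nat -> R) (u v : R),
      is_lim_seq un (Finite u) -> is_lim_seq vn (Finite v) ->
      seq_cv4 (fun n => X (un n) (vn n)) (X u v)) /\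
  (forall (un vn : nat -> R) (u v : R),
      seq_cv4 (fun n => X (un n) (vn n)) (X u v) ->
      is_lim_seq un (Finite u) /\ is_lim_seq vn (Finite v)).

(** Closed subset of R^4 (for a surface in the closed S^2 x R: properness of the inclusion). *)
Definition closed4 (S : P4 -> Prop) : Prop :=
  forall (x : nat -> P4) (l : P4), (forall n, S (x n)) -> seq_cv4 x l -> S l.

Definition totally_umbilic_param (X : R -> R -> P4) : Prop :=
  forall u v, exists (N : P4) (lam : R),
    dot3 (fst N) (fst (X u v)) = 0 /\ dot4 N N = 1 /\
    dot4 N (Xu X u v) = 0 /\ dot4 N (Xv X u v) = 0 /\
    dot4 (Xuu X u v) N = lam * dot4 (Xu X u v) (Xu X u v) /\
    dot4 (Xuv X u v) N = lam * dot4 (Xu X u v) (Xv X u v) /\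
    dot4 (Xvv X u v) N = lam * dot4 (Xv X u v) (Xv X u v).

(** Completeness of the induced metric: every divergent C^1 path
    [0,oo) -> surface has infinite length. *)
Definition complete_param (X : R -> R -> P4) : Prop :=
  forall c1 c2 : R -> R,
    (forall r, 0 <= r -> ex_derive c1 r /\ ex_derive c2 r /\
                         continuous (Derive c1) r /\ continuous (Derive c2) r) ->
    is_lim (fun r => c1 r ^ 2 + c2 r ^ 2) p_infty p_infty ->
    forall M : R, exists T : R, 0 <= T /\
      M < RInt (fun r => sqrt (dot4 (dvec (fun w => X (c1 w) (c2 w)) r)
                                    (dvec (fun w => X (c1 w) (c2 w)) r))) 0 T.

(* Main.v *)
Require Import Defs.
From Stdlib Require Import Reals Lra Lia FunctionalExtensionality.
From Coquelicot Require Import Coquelicot.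
Open Scope R_scope.

Ltac rsimpl := unfold scal, mult, plus, opp, minus, zero, one; simpl; unfold mult, plus, opp, zero, one; simpl.

Lemma exp_pos' x : 0 < exp x. Proof. apply exp_pos. Qed.

Lemma cosh_pos x : 0 < cosh x.
Proof. unfold cosh. pose proof (exp_pos x). pose proof (exp_pos (-x)). lra. Qed.

Lemma cosh_sinh x : cosh x ^ 2 - sinh x ^ 2 = 1.
Proof.
  unfold cosh, sinh. rewrite exp_Ropp. pose proof (exp_pos x).
  field. lra.
Qed.

Lemma cosh_ge_1 x : 1 <= cosh x.
Proof. pose proof (cosh_sinh x). pose proof (cosh_pos x). nra. Qed.

Definition sech x := / cosh x.

Lemma is_derive_eq (f : R -> R) x l l' : is_derive f x l -> l = l' -> is_derive f x l'.
Proof. intros H ->; auto. Qed.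

Lemma tanh_sq x : tanh x ^ 2 + sech x ^ 2 = 1.
Proof.
  unfold tanh, sech. pose proof (cosh_sinh x). pose proof (cosh_pos x).
  replace ((sinh x / cosh x)^2 + (/cosh x)^2) with ((sinh x ^2 + 1)/cosh x^2) by (field; lra).
  replace (sinh x^2+1) with (cosh x^2) by lra. field. lra.
Qed.

Lemma sech_pos x : 0 < sech x.
Proof. unfold sech. apply Rinv_0_lt_compat, cosh_pos. Qed.

Lemma tanh_bound x : -1 < tanh x < 1.
Proof.
  unfold tanh, cosh, sinh. pose proof (exp_pos x). pose proof (exp_pos (-x)).
  split; apply Rmult_lt_reg_r with ((exp x + exp (- x)) / 2); try lra;
  field_simplify; lra.
Qed.

Lemma is_derive_cosh x : is_derive cosh x (sinh x).
Proof. apply is_derive_Reals, derivable_pt_lim_cosh. Qed.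
Lemma is_derive_sinh x : is_derive sinh x (cosh x).
Proof. apply is_derive_Reals, derivable_pt_lim_sinh. Qed.

Lemma is_derive_sech x : is_derive sech x (- sech x * tanh x).
Proof.
  unfold sech. pose proof (cosh_pos x).
  eapply is_derive_eq.
  apply (is_derive_inv cosh). apply is_derive_cosh. lra.
  unfold tanh. simpl. field. lra.
Qed.

Lemma is_derive_tanh x : is_derive tanh x (sech x ^ 2).
Proof.
  unfold tanh, sech. pose proof (cosh_pos x).
  eapply is_derive_eq.
  apply (is_derive_div sinh cosh). apply is_derive_sinh. apply is_derive_cosh. lra.
  pose proof (cosh_sinh x). simpl. field_simplify; try lra.
  replace (cosh x ^ 2) with (1 + sinh x ^ 2) by lra. field. nra.
Qed.

Definition lch x := ln (cosh x).

Lemma is_derive_lch x : is_derive lch x (tanh x).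
Proof.
  unfold lch. pose proof (cosh_pos x).
  eapply is_derive_eq.
  apply (is_derive_comp ln cosh). apply is_derive_Reals, derivable_pt_lim_ln. auto.
  apply is_derive_cosh. unfold tanh. rsimpl. field. lra.
Qed.

Lemma continuous_cosh x : continuous cosh x.
Proof. apply (ex_derive_continuous cosh). eexists. apply is_derive_cosh. Qed.
Lemma continuous_sinh x : continuous sinh x.
Proof. apply (ex_derive_continuous sinh). eexists. apply is_derive_sinh. Qed.
Lemma continuous_tanh x : continuous tanh x.
Proof. apply (ex_derive_continuous tanh). eexists. apply is_derive_tanh. Qed.
Lemma continuous_sech x : continuous sech x.
Proof. apply (ex_derive_continuous sech). eexists. apply is_derive_sech. Qed.
Lemma continuous_lch x : continuous lch x.
Proof. apply (ex_derive_continuous lch). eexists. apply is_derive_lch. Qed.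

Definition artanh y := ln ((1 + y) / (1 - y)) / 2.

Lemma tanh_exp x : tanh x = (exp (2*x) - 1) / (exp (2*x) + 1).
Proof.
  unfold tanh, sinh, cosh. rewrite exp_Ropp.
  replace (2*x) with (x + x) by ring. rewrite exp_plus.
  pose proof (exp_pos x). field. split; nra.
Qed.

Lemma artanh_tanh x : artanh (tanh x) = x.
Proof.
  unfold artanh. rewrite tanh_exp. pose proof (exp_pos (2*x)).
  replace ((1 + (exp (2 * x) - 1) / (exp (2 * x) + 1)) / (1 - (exp (2 * x) - 1) / (exp (2 * x) + 1)))
    with (exp (2*x)) by (field; lra).
  rewrite ln_exp. field.
Qed.

Lemma tanh_artanh y : -1 < y < 1 -> tanh (artanh y) = y.
Proof.
  intros Hy. rewrite tanh_exp. unfold artanh.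
  replace (2 * (ln ((1 + y) / (1 - y)) / 2)) with (ln ((1 + y) / (1 - y))) by field.
  rewrite exp_ln. field. split; lra.
  apply Rdiv_lt_0_compat; lra.
Qed.

Lemma tanh_inj x y : tanh x = tanh y -> x = y.
Proof. intros H. rewrite <- (artanh_tanh x), <- (artanh_tanh y), H. auto. Qed.

Lemma continuous_artanh y : -1 < y < 1 -> continuous artanh y.
Proof.
  intros Hy. apply (ex_derive_continuous artanh).
  unfold artanh. auto_derive. split. apply Rgt_not_eq. lra.
  split; auto. apply Rdiv_lt_0_compat; lra.
Qed.

Lemma sech_tanh_rel x : sech x = sqrt (1 - tanh x ^ 2).
Proof.
  pose proof (tanh_sq x). pose proof (sech_pos x).
  replace (1 - tanh x ^ 2) with (sech x ^ 2) by lra.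
  rewrite sqrt_pow2; lra.
Qed.

Lemma lch_sech x : lch x = - ln (sech x).
Proof. unfold lch, sech. rewrite ln_Rinv. ring. apply cosh_pos. Qed.

Lemma lch_ge x : Rabs x - ln 2 <= lch x.
Proof.
  unfold lch. assert (exp (Rabs x) / 2 <= cosh x).
  { unfold cosh. pose proof (exp_pos x). pose proof (exp_pos (-x)).
    unfold Rabs; destruct (Rcase_abs x); lra. }
  assert (Rabs x - ln 2 = ln (exp (Rabs x) / 2)).
  { unfold Rdiv. rewrite ln_mult, ln_exp, ln_Rinv; try lra. apply exp_pos.
    all: try (apply Rinv_0_lt_compat; lra). }
  rewrite H0. destruct (Rle_lt_or_eq_dec _ _ H).
  left. apply ln_increasing. pose proof (exp_pos (Rabs x)). lra. auto.
  right. rewrite e. auto.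
Qed.

Lemma lch_nonneg x : 0 <= lch x.
Proof.
  unfold lch. rewrite <- ln_1. destruct (Rle_lt_or_eq_dec _ _ (cosh_ge_1 x)).
  left. apply ln_increasing; lra. right. rewrite e; auto.
Qed.

Definition Fode (x : R) := - 1 ^ 2 * sin x * cos x.

Lemma Fode_lip x y : Rabs (Fode x - Fode y) <= Rabs (x - y).
Proof.
  unfold Fode.
  assert (H := bounded_variation (fun z => sin z * cos z) (fun z => cos z * cos z - sin z * sin z) 1 y x).
  replace (- 1 ^ 2 * sin x * cos x - - 1 ^ 2 * sin y * cos y) with (- (sin x * cos x - sin y * cos y)) by ring.
  rewrite Rabs_Ropp.
  rewrite Rmult_1_l in H. apply H. intros t _. split.
  - auto_derive. auto. ring.
  - pose proof (sin2_cos2 t). unfold Rsqr in H0.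
    apply Rabs_le. nra.
Qed.

Lemma MVT_le (f df : R -> R) a b : a <= b -> (forall x, is_derive f x (df x)) ->
  (forall x, df x <= 0) -> f b <= f a.
Proof.
  intros Hab Hd Hneg.
  destruct (MVT_gen f a b df) as [c [Hc Heq]].
  - intros; apply Hd.
  - intros. apply continuity_pt_filterlim. apply (ex_derive_continuous f). eexists; apply Hd.
  - assert (df c * (b - a) <= 0). { specialize (Hneg c). nra. } lra.
Qed.

Lemma ode_unique (psi phi : R -> R) :
  (forall s, ex_derive psi s) -> (forall s, is_derive (Derive psi) s (Fode (psi s))) ->
  (forall s, ex_derive phi s) -> (forall s, is_derive (Derive phi) s (Fode (phi s))) ->
  psi 0 = phi 0 -> Derive psi 0 = Derive phi 0 -> forall s, psi s = phi s.
Proof.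
  intros H1 H2 H3 H4 H5 H6.
  set (E := fun s => (psi s - phi s) ^ 2 + (Derive psi s - Derive phi s) ^ 2).
  set (dE := fun s => 2 * (psi s - phi s) * (Derive psi s - Derive phi s)
                    + 2 * (Derive psi s - Derive phi s) * (Fode (psi s) - Fode (phi s))).
  assert (HE : forall s, is_derive E s (dE s)).
  { intros s. unfold E, dE. eapply is_derive_eq.
    apply @is_derive_plus.
    apply (is_derive_pow (fun s => psi s - phi s)). apply @is_derive_minus.
    apply Derive_correct, H1. apply Derive_correct, H3.
    apply (is_derive_pow (fun s => Derive psi s - Derive phi s)). apply @is_derive_minus.
    apply H2. apply H4. rsimpl. simpl. ring. }
  assert (Hb : forall s, Rabs (dE s) <= 2 * E s).
  { intros s. unfold dE, E. pose proof (Fode_lip (psi s) (phi s)).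
    set (d := psi s - phi s) in *. set (e := Derive psi s - Derive phi s).
    set (g := Fode (psi s) - Fode (phi s)) in *.
    assert (Rabs (2*d*e + 2*e*g) <= 4 * Rabs d * Rabs e).
    { eapply Rle_trans. apply Rabs_triang. rewrite !Rabs_mult.
      rewrite Rabs_pos_eq by lra. pose proof (Rabs_pos e). nra. }
    pose proof (Rabs_pos d). pose proof (Rabs_pos e).
    assert (Rabs d ^ 2 = d ^ 2). { rewrite RPow_abs. apply Rabs_pos_eq. nra. }
    assert (Rabs e ^ 2 = e ^ 2). { rewrite RPow_abs. apply Rabs_pos_eq. nra. }
    pose proof (pow2_ge_0 (Rabs d - Rabs e)). nra. }
  assert (HE0 : E 0 = 0). { unfold E. rewrite H5, H6. ring. }
  assert (Enn : forall s, 0 <= E s). { intros; unfold E. pose proof (pow2_ge_0 (psi s - phi s)). pose proof (pow2_ge_0 (Derive psi s - Derive phi s)). lra. }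
  assert (Ez : forall s, E s = 0).
  { intros s. destruct (Rle_dec 0 s).
    - assert (E s * exp (-2 * s) <= E 0 * exp (-2 * 0)).
      { apply (MVT_le (fun s => E s * exp (-2 * s)) (fun s => (dE s - 2 * E s) * exp (-2*s))); auto.
        intros x. eapply is_derive_eq. apply @is_derive_mult; [apply HE | auto_derive; auto | intros; apply Rmult_comm].
        rsimpl. ring.
        intros x. pose proof (exp_pos (-2*x)). pose proof (Hb x).
        apply Rabs_le_between in H0. nra. }
      rewrite HE0 in H. pose proof (exp_pos (-2*s)). pose proof (Enn s). nra.
    - assert (E s * exp (2 * s) <= E 0 * exp (2 * 0)).
      { assert (HH := MVT_le (fun s => - (E s * exp (2 * s))) (fun s => - ((dE s + 2 * E s) * exp (2*s))) s 0).
        cut (- (E 0 * exp (2 * 0)) <= - (E s * exp (2 * s))). lra.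
        apply HH. lra.
        intros x. eapply is_derive_eq. apply @is_derive_opp. apply @is_derive_mult; [apply HE | auto_derive; auto | intros; apply Rmult_comm].
        rsimpl. ring.
        intros x. pose proof (exp_pos (2*x)). pose proof (Hb x).
        apply Rabs_le_between in H0. nra. }
      rewrite HE0 in H. pose proof (exp_pos (2*s)). pose proof (Enn s). nra. }
  intros s. specialize (Ez s). unfold E in Ez.
  assert ((psi s - phi s)^2 = 0). { pose proof (pow2_ge_0 (psi s - phi s)). pose proof (pow2_ge_0 (Derive psi s - Derive phi s)). lra. }
  nra.
Qed.

Definition phi (s : R) := PI / 2 - 2 * atan (exp (- s)).

Lemma atan_exp_bound s : 0 < atan (exp (- s)) < PI / 2.
Proof.
  split. rewrite <- atan_0. apply atan_increasing. apply exp_pos.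
  pose proof (atan_bound (exp (-s))). lra.
Qed.

Lemma phi_bound s : - (PI / 2) < phi s < PI / 2.
Proof. unfold phi. pose proof (atan_exp_bound s). lra. Qed.

Lemma exp_s_inv s : exp s = / exp (- s).
Proof. rewrite exp_Ropp. rewrite Rinv_inv. auto. Qed.

Lemma cos_atan_sq x : cos (atan x) * cos (atan x) = / (1 + x ^ 2).
Proof.
  rewrite cos_atan. assert (0 < 1 + x²) by (unfold Rsqr; nra).
  pose proof (sqrt_lt_R0 _ H).
  replace (1 / sqrt (1 + x²) * (1 / sqrt (1 + x²))) with (/ (sqrt (1 + x²) * sqrt (1 + x²))) by (field; lra).
  rewrite sqrt_sqrt by lra. unfold Rsqr. f_equal. ring.
Qed.

Lemma sin_cos_atan x : sin (atan x) * cos (atan x) = x / (1 + x ^ 2).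
Proof.
  rewrite sin_atan, cos_atan. assert (0 < 1 + x²) by (unfold Rsqr; nra).
  pose proof (sqrt_lt_R0 _ H).
  replace (x / sqrt (1 + x²) * (1 / sqrt (1 + x²))) with (x / (sqrt (1 + x²) * sqrt (1 + x²))) by (field; lra).
  rewrite sqrt_sqrt by lra. unfold Rsqr. f_equal. ring.
Qed.

Lemma sin_phi s : sin (phi s) = tanh s.
Proof.
  unfold phi. rewrite sin_shift, cos_2a_cos, Rmult_assoc, cos_atan_sq.
  unfold tanh, sinh, cosh. rewrite (exp_s_inv s). pose proof (exp_pos (-s)).
  field. nra.
Qed.

Lemma cos_phi s : cos (phi s) = sech s.
Proof.
  unfold phi. rewrite cos_shift, sin_2a, Rmult_assoc, sin_cos_atan.
  unfold sech, cosh. rewrite (exp_s_inv s). pose proof (exp_pos (-s)).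
  field. nra.
Qed.

Lemma is_derive_phi s : is_derive phi s (sech s).
Proof.
  unfold phi. assert (He : is_derive (fun s => exp (- s)) s (- exp (- s))).
  { auto_derive; auto. ring. }
  eapply is_derive_eq.
  apply @is_derive_minus. apply is_derive_const.
  apply @is_derive_scal.
  apply (is_derive_comp atan (fun s => exp (- s))).
  apply is_derive_Reals, derivable_pt_lim_atan. apply He.
  rsimpl. unfold sech, cosh. rewrite (exp_s_inv s). pose proof (exp_pos (-s)). field. nra.
Qed.

Lemma Derive_phi : forall s, Derive phi s = sech s.
Proof. intros; apply is_derive_unique, is_derive_phi. Qed.

Lemma phi_ode s : is_derive (Derive phi) s (Fode (phi s)).
Proof.
  eapply is_derive_ext. intros; symmetry; apply Derive_phi.
  eapply is_derive_eq. apply is_derive_sech.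
  unfold Fode. rewrite sin_phi, cos_phi. unfold tanh, sech. simpl. field.
  pose proof (cosh_pos s). lra.
Qed.

Lemma phi_0 : phi 0 = 0.
Proof. unfold phi. rewrite Ropp_0, exp_0, atan_1. field. Qed.

Lemma sech_0 : sech 0 = 1.
Proof. unfold sech. rewrite cosh_0. apply Rinv_1. Qed.

Lemma rho_eq rho : is_rho_sol 1 rho -> forall s, rho s = phi s.
Proof.
  intros [H1 [H2 [H3 H4]]]. apply ode_unique; auto.
  intros; eexists; apply is_derive_phi. apply phi_ode.
  rewrite phi_0; auto. rewrite Derive_phi, sech_0; auto.
Qed.

Lemma lch_0 : lch 0 = 0.
Proof. unfold lch. rewrite cosh_0. apply ln_1. Qed.

Lemma t_eq rho : is_rho_sol 1 rho -> forall s, t_fun 1 rho s = lch s.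
Proof.
  intros Hr s. unfold t_fun.
  rewrite (RInt_ext _ tanh). 2: { intros x _. rewrite (rho_eq rho Hr), sin_phi. apply Rmult_1_l. }
  assert (Hi := is_RInt_derive lch tanh 0 s (fun x _ => is_derive_lch x) (fun x _ => continuous_tanh x)).
  apply is_RInt_unique in Hi. rewrite Hi, lch_0. rsimpl. ring.
Qed.

Ltac v3eq := apply pair_equal_spec; split; [apply pair_equal_spec; split|]; ring.

Lemma dot3_comm u v : dot3 u v = dot3 v u.
Proof. destruct u as [[? ?] ?], v as [[? ?] ?]; simpl; ring. Qed.

Lemma dot3_lin_l a b u v x : dot3 (add3 (scal3 a u) (scal3 b v)) x = a * dot3 u x + b * dot3 v x.
Proof. destruct u as [[? ?] ?], v as [[? ?] ?], x as [[? ?] ?]; simpl; ring. Qed.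

Definition frame (p w : V3) := on_sphere p /\ on_sphere w /\ dot3 p w = 0.

Definition Fr (p w : V3) (a b c : R) : V3 :=
  add3 (add3 (scal3 a p) (scal3 b w)) (scal3 c (cross3 p w)).

Lemma dot3_Fr_gen p w a b c x :
  dot3 (Fr p w a b c) x = a * dot3 p x + b * dot3 w x + c * dot3 (cross3 p w) x.
Proof. destruct p as [[? ?] ?], w as [[? ?] ?], x as [[? ?] ?]; simpl; ring. Qed.

Lemma cross_dot_p p w : dot3 (cross3 p w) p = 0.
Proof. destruct p as [[? ?] ?], w as [[? ?] ?]; simpl; ring. Qed.
Lemma cross_dot_w p w : dot3 (cross3 p w) w = 0.
Proof. destruct p as [[? ?] ?], w as [[? ?] ?]; simpl; ring. Qed.
Lemma cross_dot_self p w : dot3 (cross3 p w) (cross3 p w) = dot3 p p * dot3 w w - dot3 p w ^ 2.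
Proof. destruct p as [[? ?] ?], w as [[? ?] ?]; simpl; ring. Qed.

Lemma frame_nn p w : frame p w -> dot3 (cross3 p w) (cross3 p w) = 1.
Proof. intros [Hp [Hw Hpw]]. unfold on_sphere in *. rewrite cross_dot_self, Hp, Hw, Hpw. ring. Qed.

Lemma Fr_p p w a b c : frame p w -> dot3 (Fr p w a b c) p = a.
Proof.
  intros Hf. destruct Hf as [Hp [Hw Hpw]]. unfold on_sphere in *.
  rewrite dot3_Fr_gen, Hp, (dot3_comm w p), Hpw, cross_dot_p. ring.
Qed.
Lemma Fr_w p w a b c : frame p w -> dot3 (Fr p w a b c) w = b.
Proof.
  intros Hf. destruct Hf as [Hp [Hw Hpw]]. unfold on_sphere in *.
  rewrite dot3_Fr_gen, Hw, Hpw, cross_dot_w. ring.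
Qed.
Lemma Fr_n p w a b c : frame p w -> dot3 (Fr p w a b c) (cross3 p w) = c.
Proof.
  intros Hf. pose proof (frame_nn p w Hf). destruct Hf as [Hp [Hw Hpw]]. unfold on_sphere in *.
  rewrite dot3_Fr_gen, H, (dot3_comm p), (dot3_comm w), cross_dot_p, cross_dot_w. ring.
Qed.

Lemma Fr_dot p w a b c a' b' c' : frame p w ->
  dot3 (Fr p w a b c) (Fr p w a' b' c') = a * a' + b * b' + c * c'.
Proof.
  intros Hf. rewrite dot3_Fr_gen, !(dot3_comm _ (Fr _ _ _ _ _)), Fr_p, Fr_w, Fr_n by auto. ring.
Qed.

Lemma decomp p w q : frame p w -> q = Fr p w (dot3 q p) (dot3 q w) (dot3 q (cross3 p w)).
Proof.
  intros [Hp [Hw Hpw]]. unfold on_sphere in *.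
  destruct p as [[p1 p2] p3], w as [[w1 w2] w3], q as [[q1 q2] q3].
  unfold Fr; simpl in *. set (P := p1 * p1 + p2 * p2 + p3 * p3) in *. set (W := w1 * w1 + w2 * w2 + w3 * w3) in *.
  set (K := p1 * w1 + p2 * w2 + p3 * w3) in *.
  set (qp := q1 * p1 + q2 * p2 + q3 * p3). set (qw := q1 * w1 + q2 * w2 + q3 * w3).
  set (qn := q1 * (p2 * w3 - p3 * w2) + q2 * (p3 * w1 - p1 * w3) + q3 * (p1 * w2 - p2 * w1)).
  assert (E1 : (P * W - K ^ 2) * q1 = (qp * W - qw * K) * p1 + (qw * P - qp * K) * w1 + qn * (p2 * w3 - p3 * w2))
    by (unfold P, W, K, qp, qw, qn; ring).
  assert (E2 : (P * W - K ^ 2) * q2 = (qp * W - qw * K) * p2 + (qw * P - qp * K) * w2 + qn * (p3 * w1 - p1 * w3))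
    by (unfold P, W, K, qp, qw, qn; ring).
  assert (E3 : (P * W - K ^ 2) * q3 = (qp * W - qw * K) * p3 + (qw * P - qp * K) * w3 + qn * (p1 * w2 - p2 * w1))
    by (unfold P, W, K, qp, qw, qn; ring).
  rewrite Hp, Hw, Hpw in E1, E2, E3.
  f_equal; [f_equal|]; lra.
Qed.

Lemma parseval p w u v : frame p w ->
  dot3 u v = dot3 u p * dot3 v p + dot3 u w * dot3 v w + dot3 u (cross3 p w) * dot3 v (cross3 p w).
Proof.
  intros Hf. rewrite (decomp p w u Hf) at 1. rewrite (decomp p w v Hf) at 1.
  apply Fr_dot; auto.
Qed.

Lemma vec_ext p w u v : frame p w ->
  dot3 u p = dot3 v p -> dot3 u w = dot3 v w -> dot3 u (cross3 p w) = dot3 v (cross3 p w) -> u = v.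
Proof.
  intros Hf H1 H2 H3. rewrite (decomp p w u Hf), (decomp p w v Hf), H1, H2, H3. auto.
Qed.

(* Rodrigues rotation about p *)
Definition Rot (p : V3) (C S : R) (x : V3) : V3 :=
  add3 (add3 (scal3 C x) (scal3 S (cross3 p x))) (scal3 ((1 - C) * dot3 p x) p).

Lemma Rot_p p w C S x : frame p w -> dot3 (Rot p C S x) p = dot3 x p.
Proof.
  intros [Hp _]. unfold on_sphere in Hp.
  assert (E : dot3 (Rot p C S x) p = (C + (1 - C) * dot3 p p) * dot3 x p)
    by (destruct p as [[? ?] ?], x as [[? ?] ?]; simpl; ring).
  rewrite E, Hp. ring.
Qed.

Lemma Rot_w p w C S x : frame p w -> dot3 (Rot p C S x) w = C * dot3 x w - S * dot3 x (cross3 p w).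
Proof.
  intros [_ [_ Hpw]].
  assert (E : dot3 (Rot p C S x) w = C * dot3 x w - S * dot3 x (cross3 p w) + (1 - C) * dot3 p x * dot3 p w)
    by (destruct p as [[? ?] ?], x as [[? ?] ?], w as [[? ?] ?]; simpl; ring).
  rewrite E, Hpw. ring.
Qed.

Lemma Rot_n p w C S x : frame p w -> dot3 (Rot p C S x) (cross3 p w) = S * dot3 x w + C * dot3 x (cross3 p w).
Proof.
  intros [Hp [_ Hpw]]. unfold on_sphere in Hp.
  assert (E : dot3 (Rot p C S x) (cross3 p w) = S * (dot3 p p * dot3 x w - dot3 p w * dot3 x p) + C * dot3 x (cross3 p w))
    by (destruct p as [[? ?] ?], x as [[? ?] ?], w as [[? ?] ?]; simpl; ring).
  rewrite E, Hp, Hpw. ring.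
Qed.

Lemma Rot_rotation p w C S : frame p w -> C ^ 2 + S ^ 2 = 1 -> rotation_fixing p (Rot p C S).
Proof.
  intros Hf HCS. split; [split; [|split]|].
  - intros a b u v. unfold Rot.
    destruct p as [[? ?] ?], u as [[? ?] ?], v as [[? ?] ?]; simpl. v3eq.
  - intros u v. rewrite (parseval p w (Rot p C S u) (Rot p C S v) Hf).
    rewrite !(Rot_p p w), !Rot_w, !Rot_n by auto. rewrite (parseval p w u v Hf).
    assert (S * S = 1 - C * C) by nra.
    transitivity (dot3 u p * dot3 v p + (C * C + S * S) * (dot3 u w * dot3 v w + dot3 u (cross3 p w) * dot3 v (cross3 p w))).
    ring. rewrite H. ring.
  - destruct Hf as [Hp _]. unfold on_sphere in Hp.
    assert (E : triple3 (Rot p C S (1, 0, 0)) (Rot p C S (0, 1, 0)) (Rot p C S (0, 0, 1))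
      = (C + (1 - C) * dot3 p p) * (C * C + S * S * dot3 p p))
      by (destruct p as [[? ?] ?]; unfold triple3, Rot; simpl; ring).
    rewrite E, Hp. nra.
  - apply (vec_ext p w); auto.
    + rewrite (Rot_p p w); auto.
    + rewrite Rot_w by auto. destruct Hf as [Hp [Hw Hpw]].
      rewrite Hpw, (dot3_comm p), cross_dot_p. ring.
    + rewrite Rot_n by auto. destruct Hf as [Hp [Hw Hpw]].
      rewrite Hpw, (dot3_comm p), cross_dot_p. ring.
Qed.

Lemma rot_dot_p p f u : rotation_fixing p f -> dot3 (f u) p = dot3 u p.
Proof. intros [[_ [Hd _]] Hfp]. rewrite <- Hfp at 1. apply Hd. Qed.

Lemma rot_dot p f u v : rotation_fixing p f -> dot3 (f u) (f v) = dot3 u v.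
Proof. intros [[_ [Hd _]] Hfp]. apply Hd. Qed.

Lemma gam_frame p gam : on_sphere p -> unit_speed_great_circle gam -> gam 0 = p ->
  exists w, frame p w /\ forall s, gam s = Fr p w (cos s) (sin s) 0.
Proof.
  intros Hp [c [w [Hc [Hw [Hcw Hg]]]]] H0.
  assert (c = p). { rewrite <- H0, Hg, cos_0, sin_0. destruct c as [[? ?] ?], w as [[? ?] ?]. simpl. v3eq. }
  subst c. exists w. split. split; auto.
  intros s. rewrite Hg. unfold Fr. destruct p as [[? ?] ?], w as [[? ?] ?]. simpl. v3eq.
Qed.

Lemma dot4_sub x l : dot4 (sub4 x l) (sub4 x l) =
  (coord4 0 x - coord4 0 l) ^ 2 + (coord4 1 x - coord4 1 l) ^ 2 +
  (coord4 2 x - coord4 2 l) ^ 2 + (coord4 3 x - coord4 3 l) ^ 2.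
Proof. destruct x as [[[? ?] ?] ?], l as [[[? ?] ?] ?]; unfold dot4, sub4; simpl; ring. Qed.

Lemma lim_sq_0 (d D : nat -> R) : (forall n, d n ^ 2 <= D n) -> is_lim_seq D 0 -> is_lim_seq d 0.
Proof.
  intros Hle HD.
  assert (Hs : is_lim_seq (fun n => sqrt (D n)) 0).
  { rewrite <- sqrt_0. apply is_lim_seq_continuous; auto. apply continuity_pt_sqrt; lra. }
  apply is_lim_seq_le_le with (fun n => - sqrt (D n)) (fun n => sqrt (D n)).
  - intros n. assert (Rabs (d n) <= sqrt (D n)).
    { rewrite <- sqrt_Rsqr_abs. apply sqrt_le_1_alt. unfold Rsqr. specialize (Hle n). simpl in Hle. lra. }
    apply Rabs_le_between in H. lra.
  - assert (Ho := proj1 (is_lim_seq_opp _ _) Hs). simpl in Ho. rewrite Ropp_0 in Ho. exact Ho.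
  - auto.
Qed.

Lemma cv4_coord x l i : seq_cv4 x l -> is_lim_seq (fun n => coord4 i (x n)) (coord4 i l).
Proof.
  intros H. unfold seq_cv4 in H.
  assert (Hd : is_lim_seq (fun n => coord4 i (x n) - coord4 i l) 0).
  { apply lim_sq_0 with (fun n => dot4 (sub4 (x n) l) (sub4 (x n) l)); auto.
    intros n. rewrite dot4_sub.
    pose proof (pow2_ge_0 (coord4 0 (x n) - coord4 0 l)).
    pose proof (pow2_ge_0 (coord4 1 (x n) - coord4 1 l)).
    pose proof (pow2_ge_0 (coord4 2 (x n) - coord4 2 l)).
    pose proof (pow2_ge_0 (coord4 3 (x n) - coord4 3 l)).
    destruct i as [|[|[|i]]]; try lra.
    destruct (x n) as [[[? ?] ?] ?], l as [[[? ?] ?] ?]. simpl in *. lra. }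
  apply is_lim_seq_ext with (fun n => (coord4 i (x n) - coord4 i l) + coord4 i l).
  intros; ring.
  replace (Finite (coord4 i l)) with (Rbar_plus 0 (coord4 i l)) by (simpl; f_equal; ring).
  apply is_lim_seq_plus'. auto. apply is_lim_seq_const.
Qed.

Lemma coord_cv4 x l : (forall i, (i < 4)%nat -> is_lim_seq (fun n => coord4 i (x n)) (coord4 i l)) -> seq_cv4 x l.
Proof.
  intros H. unfold seq_cv4.
  apply is_lim_seq_ext with (fun n => (coord4 0 (x n) - coord4 0 l) ^ 2 + (coord4 1 (x n) - coord4 1 l) ^ 2 +
  (coord4 2 (x n) - coord4 2 l) ^ 2 + (coord4 3 (x n) - coord4 3 l) ^ 2).
  intros; rewrite dot4_sub; auto.
  assert (Hi : forall i, (i < 4)%nat -> is_lim_seq (fun n => (coord4 i (x n) - coord4 i l) ^ 2) 0).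
  { intros i Hi.
    apply is_lim_seq_ext with (fun n => (coord4 i (x n) - coord4 i l) * (coord4 i (x n) - coord4 i l)).
    intros; ring.
    replace 0 with ((coord4 i l - coord4 i l) * (coord4 i l - coord4 i l)) by ring.
    apply is_lim_seq_mult'; apply is_lim_seq_minus'; auto; apply is_lim_seq_const. }
  replace 0 with (0 + 0 + 0 + 0) by ring.
  repeat apply is_lim_seq_plus'; apply Hi; lia.
Qed.

Lemma coord_dot3 x v : dot3 (fst x) v = coord4 0 x * fst (fst v) + coord4 1 x * snd (fst v) + coord4 2 x * snd v.
Proof. destruct x as [[[? ?] ?] ?], v as [[? ?] ?]; simpl; ring. Qed.

Lemma cv4_dot x l v : seq_cv4 x l -> is_lim_seq (fun n => dot3 (fst (x n)) v) (dot3 (fst l) v).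
Proof.
  intros H. rewrite coord_dot3.
  apply is_lim_seq_ext with (fun n => coord4 0 (x n) * fst (fst v) + coord4 1 (x n) * snd (fst v) + coord4 2 (x n) * snd v).
  intros; rewrite coord_dot3; auto.
  apply is_lim_seq_plus'. apply is_lim_seq_plus'.
  all: apply is_lim_seq_mult'; [apply cv4_coord; auto | apply is_lim_seq_const].
Qed.

Lemma cv4_snd x l : seq_cv4 x l -> is_lim_seq (fun n => snd (x n)) (snd l).
Proof.
  intros H. apply is_lim_seq_ext with (fun n => coord4 3 (x n)).
  intros; destruct (x n) as [[[? ?] ?] ?]; auto.
  replace (snd l) with (coord4 3 l) by (destruct l as [[[? ?] ?] ?]; auto).
  apply cv4_coord; auto.
Qed.

Lemma tan_pos y : 0 < y < PI / 2 -> 0 < tan y.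
Proof.
  intros Hy. unfold tan. apply Rdiv_lt_0_compat.
  apply sin_gt_0; lra. apply cos_gt_0; lra.
Qed.

Lemma graph_char r t : (exists s, phi s = r /\ lch s = t) <-> (- (PI / 2) < r < PI / 2 /\ t = - ln (cos r)).
Proof.
  split.
  - intros [s [<- <-]]. split. apply phi_bound. rewrite cos_phi, lch_sech. auto.
  - intros [Hr ->]. set (y := (PI / 2 - r) / 2).
    assert (Hy : 0 < y < PI / 2) by (unfold y; lra).
    exists (- ln (tan y)).
    assert (phi (- ln (tan y)) = r).
    { unfold phi. rewrite Ropp_involutive, exp_ln by (apply tan_pos; auto).
      rewrite atan_tan by lra. unfold y; field. }
    split; auto. rewrite <- H. rewrite cos_phi, lch_sech. auto.
Qed.

Lemma unit_speed s : ex_derive phi s /\ ex_derive lch s /\ (Derive phi s) ^ 2 + (Derive lch s) ^ 2 = 1.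
Proof.
  split. eexists; apply is_derive_phi. split. eexists; apply is_derive_lch.
  rewrite Derive_phi, (is_derive_unique _ _ _ (is_derive_lch s)).
  pose proof (tanh_sq s). lra.
Qed.

Lemma curve_open M : exists s, M < Rabs (lch s).
Proof.
  exists (Rabs M + ln 2 + 1). pose proof (lch_ge (Rabs M + ln 2 + 1)).
  rewrite Rabs_pos_eq. 2: apply lch_nonneg.
  assert (0 < ln 2) by (rewrite <- ln_1; apply ln_increasing; lra).
  rewrite (Rabs_pos_eq (Rabs M + ln 2 + 1)) in H by (pose proof (Rabs_pos M); lra).
  pose proof (Rle_abs M). lra.
Qed.

Lemma phi_odd s : phi (- s) = - phi s.
Proof.
  unfold phi. rewrite Ropp_involutive. rewrite (exp_s_inv s), atan_inv by apply exp_pos.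
  ring.
Qed.

Lemma lch_even s : lch (- s) = lch s.
Proof. unfold lch, cosh. rewrite Ropp_involutive. f_equal. field. Qed.

Lemma curve_sym s : exists s', phi s' = - phi s /\ lch s' = lch s.
Proof. exists (- s). rewrite phi_odd, lch_even. auto. Qed.

Lemma gam_w p w gam s : frame p w -> (forall s, gam s = Fr p w (cos s) (sin s) 0) ->
  dot3 (gam s) w = sin s.
Proof. intros Hf Hg. rewrite Hg, Fr_w; auto. Qed.

Lemma curve_inj p w gam s s' : frame p w -> (forall s, gam s = Fr p w (cos s) (sin s) 0) ->
  cyl_curve gam phi lch s = cyl_curve gam phi lch s' -> s = s'.
Proof.
  intros Hf Hg Heq. unfold cyl_curve in Heq. injection Heq. intros _ H1.
  assert (sin (phi s) = sin (phi s')). { rewrite <- (gam_w p w gam (phi s)), <- (gam_w p w gam (phi s')), H1; auto. }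
  rewrite !sin_phi in H. apply tanh_inj; auto.
Qed.

Lemma tanh_lim (un : nat -> R) u : is_lim_seq (fun n => tanh (un n)) (tanh u) -> is_lim_seq un u.
Proof.
  intros H. apply is_lim_seq_ext with (fun n => artanh (tanh (un n))).
  intros; apply artanh_tanh.
  replace (Finite u) with (Finite (artanh (tanh u))) by (rewrite artanh_tanh; auto). apply is_lim_seq_continuous; auto.
  apply continuity_pt_filterlim. apply continuous_artanh, tanh_bound.
Qed.

Lemma curve_proper p w gam (sn : nat -> R) s : frame p w -> (forall s, gam s = Fr p w (cos s) (sin s) 0) ->
  seq_cv4 (fun n => cyl_curve gam phi lch (sn n)) (cyl_curve gam phi lch s) -> is_lim_seq sn s.
Proof.
  intros Hf Hg H. apply cv4_dot with (v := w) in H. unfold cyl_curve in H. simpl in H.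
  apply tanh_lim. rewrite <- sin_phi.
  apply is_lim_seq_ext with (fun n => dot3 (gam (phi (sn n))) w).
  intros; rewrite (gam_w p w gam), sin_phi; auto. rewrite (gam_w p w gam) in H; auto.
Qed.

Definition inS (p : V3) (x : P4) := on_sphere (fst x) /\ 0 < dot3 (fst x) p /\ snd x = - ln (dot3 (fst x) p).

Lemma lim_cont (f : R -> R) (un : nat -> R) (u : R) : (forall x, continuous f x) -> is_lim_seq un u ->
  is_lim_seq (fun n => f (un n)) (f u).
Proof. intros Hf H. apply is_lim_seq_continuous; [apply continuity_pt_filterlim; apply Hf | exact H]. Qed.

Lemma lim_eq (un : nat -> R) (a b : R) : is_lim_seq un a -> is_lim_seq un b -> a = b.
Proof. intros H1 H2. apply is_lim_seq_unique in H1. apply is_lim_seq_unique in H2. rewrite H1 in H2. injection H2; auto. Qed.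

Lemma charS p w gam x : frame p w -> (forall s, gam s = Fr p w (cos s) (sin s) 0) ->
  (rotational_surface p gam phi lch x <-> inS p x).
Proof.
  intros Hf Hg. split.
  - intros [f [s [Hrot ->]]]. unfold inS; simpl.
    assert (E : dot3 (f (gam (phi s))) p = sech s).
    { rewrite (rot_dot_p p f _ Hrot), Hg, Fr_p by auto. apply cos_phi. }
    rewrite E.
    split; [|split].
    + unfold on_sphere. rewrite (rot_dot p f _ _ Hrot), Hg, Fr_dot by auto.
      pose proof (sin2_cos2 (phi s)). unfold Rsqr in H. lra.
    + apply sech_pos.
    + apply lch_sech.
  - intros [Hs [Ha Ht]]. destruct x as [q tt]. simpl in *.
    set (a := dot3 q p) in *. set (b := dot3 q w). set (c := dot3 q (cross3 p w)).
    assert (Hpar : a ^ 2 + b ^ 2 + c ^ 2 = 1).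
    { unfold on_sphere in Hs. rewrite (parseval p w q q Hf) in Hs. unfold a, b, c. lra. }
    set (be := sqrt (1 - a ^ 2)).
    assert (Hbe0 : 0 <= be) by apply sqrt_pos.
    assert (Hbe2 : be ^ 2 = b ^ 2 + c ^ 2).
    { unfold be. rewrite pow2_sqrt; nra. }
    assert (Hbe2' : be * be = 1 - a ^ 2) by nra.
    set (r := atan (be / a)).
    assert (Hsq : sqrt (1 + (be / a)²) = / a).
    { replace (1 + (be / a)²) with ((/ a) ^ 2). apply sqrt_pow2.
      left; apply Rinv_0_lt_compat; auto. unfold Rsqr. field_simplify; try lra.
      replace (be ^ 2) with (1 - a ^ 2) by nra. field. lra. }
    assert (Hcr : cos r = a). { unfold r. rewrite cos_atan, Hsq. field. lra. }
    assert (Hsr : sin r = be). { unfold r. rewrite sin_atan, Hsq. field. lra. }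
    destruct (proj2 (graph_char r tt)) as [s [Hs1 Hs2]].
    { split. pose proof (atan_bound (be / a)). fold r in H. lra. rewrite Hcr. auto. }
    assert (HCS : exists C S, C ^ 2 + S ^ 2 = 1 /\ C * be = b /\ S * be = c).
    { destruct (Req_dec be 0) as [He|He].
      - exists 1, 0. rewrite He in *. split; [ring|]. split; nra.
      - exists (b / be), (c / be). split; [|split]; field_simplify; auto.
        rewrite <- Hbe2. field. auto. }
    destruct HCS as [C [S [HCS [HC HS]]]].
    exists (Rot p C S), s. split. apply (Rot_rotation p w); auto.
    f_equal; auto.
    apply (vec_ext p w); auto.
    + rewrite (Rot_p p w), Hg, Fr_p, Hs1, Hcr by auto. auto.
    + rewrite Rot_w, Hg, Fr_w, Fr_n, Hs1, Hsr by auto. fold b. lra.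
    + rewrite Rot_n, Hg, Fr_w, Fr_n, Hs1, Hsr by auto. fold c. lra.
Qed.


Lemma closed_inS p w (x : nat -> P4) l : frame p w -> (forall n, inS p (x n)) -> seq_cv4 x l -> inS p l.
Proof.
  intros Hf Hx Hl.
  assert (Ha := cv4_dot x l p Hl). assert (Hb := cv4_dot x l w Hl).
  assert (Hc := cv4_dot x l (cross3 p w) Hl). assert (Ht := cv4_snd x l Hl).
  assert (He : is_lim_seq (fun n => dot3 (fst (x n)) p) (exp (- snd l))).
  { apply is_lim_seq_ext with (fun n => exp (- snd (x n))).
    intros n. destruct (Hx n) as [_ [H1 H2]]. rewrite H2, Ropp_involutive, exp_ln; auto.
    apply (lim_cont (fun t => exp (- t))); auto.
    intros; apply (ex_derive_continuous (fun t => exp (-t))). auto_derive; auto. }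
  assert (Hae : dot3 (fst l) p = exp (- snd l)) by (eapply lim_eq; eauto).
  split; [|split].
  - unfold on_sphere. rewrite (parseval p w _ _ Hf).
    apply (lim_eq (fun n => dot3 (fst (x n)) p * dot3 (fst (x n)) p + dot3 (fst (x n)) w * dot3 (fst (x n)) w +
       dot3 (fst (x n)) (cross3 p w) * dot3 (fst (x n)) (cross3 p w))).
    + repeat apply is_lim_seq_plus'; apply is_lim_seq_mult'; auto.
    + apply is_lim_seq_ext with (fun _ => 1). intros n. destruct (Hx n) as [Hs _].
      unfold on_sphere in Hs. rewrite (parseval p w _ _ Hf) in Hs. auto.
      apply is_lim_seq_const.
  - rewrite Hae. apply exp_pos.
  - rewrite Hae, ln_exp. ring.
Qed.

Definition Xs (p w : V3) (u v : R) : P4 :=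
  (Fr p w (sech u * sech v) (tanh u) (sech u * tanh v), lch u + lch v).

Lemma Xs_inS p w u v : frame p w -> inS p (Xs p w u v).
Proof.
  intros Hf. unfold inS, Xs; simpl. rewrite Fr_p by auto.
  pose proof (sech_pos u). pose proof (sech_pos v).
  split; [|split].
  - unfold on_sphere. rewrite Fr_dot by auto.
    pose proof (tanh_sq u). pose proof (tanh_sq v).
    transitivity (sech u ^ 2 * (tanh v ^ 2 + sech v ^ 2) + tanh u ^ 2). ring.
    rewrite H2. lra.
  - apply Rmult_lt_0_compat; auto.
  - rewrite ln_mult, !lch_sech by auto. ring.
Qed.

Lemma sqrt_sq_pos x : 0 <= x -> sqrt (x ^ 2) = x.
Proof. apply sqrt_pow2. Qed.

Lemma inS_Xs p w x : frame p w -> inS p x -> exists u v, x = Xs p w u v.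
Proof.
  intros Hf [Hs [Ha Ht]]. destruct x as [q tt]. simpl in *.
  set (a := dot3 q p) in *. set (b := dot3 q w). set (c := dot3 q (cross3 p w)).
  assert (Hpar : a ^ 2 + b ^ 2 + c ^ 2 = 1).
  { unfold on_sphere in Hs. rewrite (parseval p w q q Hf) in Hs. unfold a, b, c. lra. }
  assert (Hb : -1 < b < 1) by nra.
  set (u := artanh b). assert (Htu : tanh u = b) by (apply tanh_artanh; auto).
  set (m := sech u). assert (Hm : 0 < m) by apply sech_pos.
  assert (Hm2 : m ^ 2 = 1 - b ^ 2). { pose proof (tanh_sq u). unfold m. rewrite <- Htu. lra. }
  assert (Hc : -1 < c / m < 1).
  { assert ((c/m)^2 < 1). { replace ((c/m)^2) with (c^2 / m^2) by (field; lra).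
      apply Rmult_lt_reg_r with (m^2). nra. field_simplify; nra. }
    nra. }
  set (v := artanh (c / m)). assert (Htv : tanh v = c / m) by (apply tanh_artanh; auto).
  assert (Hsv : sech v = a / m).
  { rewrite sech_tanh_rel, Htv. replace (1 - (c / m) ^ 2) with ((a / m) ^ 2).
    apply sqrt_pow2. left; apply Rdiv_lt_0_compat; auto.
    field_simplify; try lra. rewrite Hm2. replace (a^2) with (1 - b^2 - c^2) by lra. field. nra. }
  exists u, v. unfold Xs. f_equal.
  - rewrite (decomp p w q Hf) at 1. fold a b c. fold m. rewrite Hsv, Htv, Htu. f_equal; field; lra.
  - rewrite Ht. rewrite !lch_sech, <- Ropp_plus_distr, <- ln_mult by apply sech_pos.
    fold m. rewrite Hsv. f_equal. f_equal. field. lra.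
Qed.

Lemma Xs_p p w u v : frame p w -> dot3 (fst (Xs p w u v)) p = sech u * sech v.
Proof. intros; unfold Xs; simpl; apply Fr_p; auto. Qed.
Lemma Xs_w p w u v : frame p w -> dot3 (fst (Xs p w u v)) w = tanh u.
Proof. intros; unfold Xs; simpl; apply Fr_w; auto. Qed.
Lemma Xs_n p w u v : frame p w -> dot3 (fst (Xs p w u v)) (cross3 p w) = sech u * tanh v.
Proof. intros; unfold Xs; simpl; apply Fr_n; auto. Qed.

Lemma Xs_inj p w u v u' v' : frame p w -> Xs p w u v = Xs p w u' v' -> u = u' /\ v = v'.
Proof.
  intros Hf H.
  assert (Hw : tanh u = tanh u'). { rewrite <- (Xs_w p w u v), <- (Xs_w p w u' v'), H; auto. }
  apply tanh_inj in Hw. subst u'. split; auto.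
  assert (Hn : sech u * tanh v = sech u * tanh v'). { rewrite <- (Xs_n p w u v), <- (Xs_n p w u v'), H; auto. }
  apply Rmult_eq_reg_l in Hn. apply tanh_inj; auto. pose proof (sech_pos u). lra.
Qed.

Definition c3 (i : nat) (v : V3) := coord4 i (v, 0).

Lemma coord_Fr p w a b c t i : (i < 3)%nat ->
  coord4 i (Fr p w a b c, t) = a * c3 i p + b * c3 i w + c * c3 i (cross3 p w).
Proof.
  intros Hi. unfold c3, Fr. destruct p as [[? ?] ?], w as [[? ?] ?].
  destruct i as [|[|[|i]]]; simpl; try ring. lia.
Qed.

Lemma Xs_cont p w un vn (u v : R) : is_lim_seq un u -> is_lim_seq vn v ->
  seq_cv4 (fun n => Xs p w (un n) (vn n)) (Xs p w u v).
Proof.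
  intros Hu Hv. apply coord_cv4. intros i Hi.
  assert (Su := lim_cont sech un u continuous_sech Hu).
  assert (Sv := lim_cont sech vn v continuous_sech Hv).
  assert (Tu := lim_cont tanh un u continuous_tanh Hu).
  assert (Tv := lim_cont tanh vn v continuous_tanh Hv).
  assert (Lu := lim_cont lch un u continuous_lch Hu).
  assert (Lv := lim_cont lch vn v continuous_lch Hv).
  destruct (Nat.lt_ge_cases i 3) as [H3|H3].
  - unfold Xs. rewrite coord_Fr by auto.
    apply is_lim_seq_ext with (fun n => sech (un n) * sech (vn n) * c3 i p + tanh (un n) * c3 i w + sech (un n) * tanh (vn n) * c3 i (cross3 p w)).
    intros; rewrite coord_Fr; auto.
    apply is_lim_seq_plus'; [apply is_lim_seq_plus'|];
      (apply is_lim_seq_mult'; [|apply is_lim_seq_const]); [apply is_lim_seq_mult'; auto | auto | apply is_lim_seq_mult'; auto].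
  - assert (i = 3)%nat by lia. subst i. unfold Xs. simpl.
    destruct (Fr p w (sech u * sech v) (tanh u) (sech u * tanh v)) as [[? ?] ?].
    apply is_lim_seq_ext with (fun n => lch (un n) + lch (vn n)).
    intros n. destruct (Fr p w (sech (un n) * sech (vn n)) (tanh (un n)) (sech (un n) * tanh (vn n))) as [[? ?] ?]. auto.
    apply is_lim_seq_plus'; auto.
Qed.

Lemma Xs_cont_inv p w un vn (u v : R) : frame p w ->
  seq_cv4 (fun n => Xs p w (un n) (vn n)) (Xs p w u v) -> is_lim_seq un u /\ is_lim_seq vn v.
Proof.
  intros Hf H.
  assert (Hw := cv4_dot _ _ w H). assert (Hn := cv4_dot _ _ (cross3 p w) H).
  assert (Hu : is_lim_seq un u).
  { apply tanh_lim. rewrite Xs_w in Hw by auto.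
    apply is_lim_seq_ext with (fun n => dot3 (fst (Xs p w (un n) (vn n))) w); auto.
    intros; apply Xs_w; auto. }
  split; auto.
  apply tanh_lim.
  assert (Su := lim_cont sech un u continuous_sech Hu).
  rewrite Xs_n in Hn by auto.
  assert (Hn' : is_lim_seq (fun n => sech (un n) * tanh (vn n)) (sech u * tanh v)).
  { apply is_lim_seq_ext with (fun n => dot3 (fst (Xs p w (un n) (vn n))) (cross3 p w)); auto.
    intros; apply Xs_n; auto. }
  assert (Hd := is_lim_seq_div' _ _ _ _ Hn' Su (Rgt_not_eq _ _ (sech_pos u))).
  replace (sech u * tanh v / sech u) with (tanh v) in Hd.
  apply is_lim_seq_ext with (fun n => sech (un n) * tanh (vn n) / sech (un n)); auto.
  intros n; field. pose proof (sech_pos (un n)); lra.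
  field. pose proof (sech_pos u). lra.
Qed.

Lemma Derive3 (A B C : R -> R) k1 k2 k3 s : ex_derive A s -> ex_derive B s -> ex_derive C s ->
  Derive (fun r => A r * k1 + B r * k2 + C r * k3) s = Derive A s * k1 + Derive B s * k2 + Derive C s * k3.
Proof.
  intros HA HB HC. apply is_derive_unique. eapply is_derive_eq.
  apply @is_derive_plus. apply @is_derive_plus.
  apply (is_derive_mult A (fun _ => k1)). apply Derive_correct; auto. apply is_derive_const. intros; apply Rmult_comm.
  apply (is_derive_mult B (fun _ => k2)). apply Derive_correct; auto. apply is_derive_const. intros; apply Rmult_comm.
  apply (is_derive_mult C (fun _ => k3)). apply Derive_correct; auto. apply is_derive_const. intros; apply Rmult_comm.
  rsimpl. ring.
Qed.

Lemma dvec_Fr p w (A B C T : R -> R) s : ex_derive A s -> ex_derive B s -> ex_derive C s -> ex_derive T s ->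
  dvec (fun r => (Fr p w (A r) (B r) (C r), T r)) s = (Fr p w (Derive A s) (Derive B s) (Derive C s), Derive T s).
Proof.
  intros HA HB HC HT. unfold dvec, Fr. destruct p as [[p1 p2] p3], w as [[w1 w2] w3]. simpl.
  rewrite !Derive3 by auto. reflexivity.
Qed.

Lemma dvec_ext (f g : R -> P4) s : (forall r, f r = g r) -> dvec f s = dvec g s.
Proof. intros H. replace f with g; auto. symmetry; apply functional_extensionality; auto. Qed.

Definition dS r := - sech r * tanh r.
Definition ddS r := sech r * tanh r ^ 2 - sech r ^ 3.

Lemma ex_d_sech r : ex_derive sech r. Proof. eexists; apply is_derive_sech. Qed.
Lemma ex_d_tanh r : ex_derive tanh r. Proof. eexists; apply is_derive_tanh. Qed.
Lemma ex_d_lch r : ex_derive lch r. Proof. eexists; apply is_derive_lch. Qed.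
Lemma D_sech r : Derive sech r = dS r. Proof. apply is_derive_unique, is_derive_sech. Qed.
Lemma D_tanh r : Derive tanh r = sech r ^ 2. Proof. apply is_derive_unique, is_derive_tanh. Qed.
Lemma D_lch r : Derive lch r = tanh r. Proof. apply is_derive_unique, is_derive_lch. Qed.

Lemma is_derive_dS r : is_derive dS r (ddS r).
Proof.
  unfold dS, ddS. eapply is_derive_eq.
  apply (is_derive_mult (fun r => - sech r) tanh). apply @is_derive_opp. apply is_derive_sech.
  apply is_derive_tanh. intros; apply Rmult_comm. rsimpl. ring.
Qed.
Lemma is_derive_sech2 r : is_derive (fun r => sech r ^ 2) r (- 2 * sech r ^ 2 * tanh r).
Proof.
  eapply is_derive_eq. apply (is_derive_pow sech 2). apply is_derive_sech. simpl. ring.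
Qed.

Lemma ex_d_mulc (f : R -> R) c r : ex_derive f r -> ex_derive (fun r => f r * c) r.
Proof. intros H. apply ex_derive_mult; auto. apply ex_derive_const. Qed.
Lemma ex_d_cmul (f : R -> R) c r : ex_derive f r -> ex_derive (fun r => c * f r) r.
Proof. intros H. apply ex_derive_mult; auto. apply ex_derive_const. Qed.
Lemma D_mulc (f : R -> R) c r : ex_derive f r -> Derive (fun r => f r * c) r = Derive f r * c.
Proof. intros H. rewrite Derive_mult; auto. rewrite Derive_const. ring. apply ex_derive_const. Qed.
Lemma D_cmul (f : R -> R) c r : ex_derive f r -> Derive (fun r => c * f r) r = c * Derive f r.
Proof. intros H. rewrite Derive_mult; auto. rewrite Derive_const. ring. apply ex_derive_const. Qed.

Lemma Xu_Xs p w u v : Xu (Xs p w) u v = (Fr p w (dS u * sech v) (sech u ^ 2) (dS u * tanh v), tanh u).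
Proof.
  unfold Xu, Xs.
  rewrite (dvec_Fr p w (fun r => sech r * sech v) tanh (fun r => sech r * tanh v) (fun r => lch r + lch v)).
  - rewrite !D_mulc, D_sech, D_tanh by apply ex_d_sech.
    rewrite Derive_plus, D_lch, Derive_const by (apply ex_d_lch || apply ex_derive_const). f_equal. ring.
  - apply ex_d_mulc, ex_d_sech.
  - apply ex_d_tanh.
  - apply ex_d_mulc, ex_d_sech.
  - apply (ex_derive_plus lch (fun _ => lch v)). apply ex_d_lch. apply ex_derive_const.
Qed.

Lemma ex_d_dS r : ex_derive dS r. Proof. eexists; apply is_derive_dS. Qed.
Lemma D_dS r : Derive dS r = ddS r. Proof. apply is_derive_unique, is_derive_dS. Qed.
Lemma ex_d_sech2 r : ex_derive (fun r => sech r ^ 2) r. Proof. eexists; apply is_derive_sech2. Qed.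
Lemma D_sech2 r : Derive (fun r => sech r ^ 2) r = - 2 * sech r ^ 2 * tanh r.
Proof. apply is_derive_unique, is_derive_sech2. Qed.

Lemma Xv_Xs p w u v : Xv (Xs p w) u v = (Fr p w (sech u * dS v) 0 (sech u * sech v ^ 2), tanh v).
Proof.
  unfold Xv, Xs.
  rewrite (dvec_Fr p w (fun r => sech u * sech r) (fun _ => tanh u) (fun r => sech u * tanh r) (fun r => lch u + lch r)).
  - rewrite !D_cmul, D_sech, D_tanh, Derive_const by (apply ex_d_sech || apply ex_d_tanh).
    rewrite Derive_plus, D_lch, Derive_const by (apply ex_d_lch || apply ex_derive_const). f_equal. ring.
  - apply ex_d_cmul, ex_d_sech.
  - apply ex_derive_const.
  - apply ex_d_cmul, ex_d_tanh.
  - apply (ex_derive_plus (fun _ => lch u) lch). apply ex_derive_const. apply ex_d_lch.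
Qed.

Lemma Xuu_Xs p w u v : Xuu (Xs p w) u v =
  (Fr p w (ddS u * sech v) (- 2 * sech u ^ 2 * tanh u) (ddS u * tanh v), sech u ^ 2).
Proof.
  unfold Xuu. rewrite (dvec_ext _ (fun r => (Fr p w (dS r * sech v) (sech r ^ 2) (dS r * tanh v), tanh r))).
  2: intros; apply Xu_Xs.
  rewrite (dvec_Fr p w (fun r => dS r * sech v) (fun r => sech r ^ 2) (fun r => dS r * tanh v) tanh).
  - rewrite !D_mulc, D_dS, D_sech2, D_tanh by apply ex_d_dS. auto.
  - apply ex_d_mulc, ex_d_dS.
  - apply ex_d_sech2.
  - apply ex_d_mulc, ex_d_dS.
  - apply ex_d_tanh.
Qed.

Lemma Xuv_Xs p w u v : Xuv (Xs p w) u v =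
  (Fr p w (dS u * dS v) 0 (dS u * sech v ^ 2), 0).
Proof.
  unfold Xuv. rewrite (dvec_ext _ (fun r => (Fr p w (dS u * sech r) (sech u ^ 2) (dS u * tanh r), tanh u))).
  2: intros; apply Xu_Xs.
  rewrite (dvec_Fr p w (fun r => dS u * sech r) (fun _ => sech u ^ 2) (fun r => dS u * tanh r) (fun _ => tanh u)).
  - rewrite !D_cmul, D_sech, D_tanh, !Derive_const by (apply ex_d_sech || apply ex_d_tanh). auto.
  - apply ex_d_cmul, ex_d_sech.
  - apply ex_derive_const.
  - apply ex_d_cmul, ex_d_tanh.
  - apply ex_derive_const.
Qed.

Lemma Xvv_Xs p w u v : Xvv (Xs p w) u v =
  (Fr p w (sech u * ddS v) 0 (sech u * (- 2 * sech v ^ 2 * tanh v)), sech v ^ 2).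
Proof.
  unfold Xvv. rewrite (dvec_ext _ (fun r => (Fr p w (sech u * dS r) 0 (sech u * sech r ^ 2), tanh r))).
  2: intros; apply Xv_Xs.
  rewrite (dvec_Fr p w (fun r => sech u * dS r) (fun _ => 0) (fun r => sech u * sech r ^ 2) tanh).
  - rewrite !D_cmul, D_dS, D_sech2, D_tanh, !Derive_const by (apply ex_d_dS || apply ex_d_sech2). auto.
  - apply ex_d_cmul, ex_d_dS.
  - apply ex_derive_const.
  - apply ex_d_cmul, ex_d_sech2.
  - apply ex_d_tanh.
Qed.

Lemma sech_x u : sech u = 2 * exp (- u) / (1 + exp (- u) ^ 2).
Proof. rewrite <- cos_phi. unfold phi. rewrite cos_shift, sin_2a, Rmult_assoc, sin_cos_atan. field. nra. Qed.
Lemma tanh_x u : tanh u = (1 - exp (- u) ^ 2) / (1 + exp (- u) ^ 2).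
Proof. rewrite <- sin_phi. unfold phi. rewrite sin_shift, cos_2a_cos, Rmult_assoc, cos_atan_sq. field. nra. Qed.

Lemma dot4_Fr p w a b c t a' b' c' t' : frame p w ->
  dot4 (Fr p w a b c, t) (Fr p w a' b' c', t') = a * a' + b * b' + c * c' + t * t'.
Proof. intros Hf. unfold dot4; simpl. rewrite Fr_dot; auto. Qed.

Ltac xsub := unfold dS, ddS; rewrite ?sech_x, ?tanh_x;
  match goal with |- context [exp (- ?u)] => let x := fresh "x" in
    pose proof (exp_pos (- u)); set (x := exp (- u)) in * end;
  try match goal with |- context [exp (- ?u)] => let x := fresh "y" in
    pose proof (exp_pos (- u)); set (x := exp (- u)) in * end.

Lemma regular_Xs p w : frame p w -> regular_param (Xs p w).
Proof.
  intros Hf u v. rewrite Xu_Xs, Xv_Xs, !dot4_Fr by auto.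
  apply Rlt_gt.
  replace (dS u * sech v * (dS u * sech v) + sech u ^ 2 * sech u ^ 2 + dS u * tanh v * (dS u * tanh v) + tanh u * tanh u) with 1.
  replace (sech u * dS v * (sech u * dS v) + 0 * 0 + sech u * sech v ^ 2 * (sech u * sech v ^ 2) + tanh v * tanh v)
    with (sech u ^ 2 * sech v ^ 2 + tanh v ^ 2).
  replace (dS u * sech v * (sech u * dS v) + sech u ^ 2 * 0 + dS u * tanh v * (sech u * sech v ^ 2) + tanh u * tanh v)
    with (tanh u * tanh v).
  - replace (1 * (sech u ^ 2 * sech v ^ 2 + tanh v ^ 2) - (tanh u * tanh v) ^ 2) with (sech u ^ 2).
    pose proof (sech_pos u). nra.
    pose proof (tanh_sq u). pose proof (tanh_sq v).
    transitivity (sech u ^ 2 * (sech v ^ 2 + tanh v ^ 2) + tanh v ^ 2 * (1 - tanh u ^ 2 - sech u ^ 2)).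
    rewrite (Rplus_comm (sech v ^ 2)), H0. replace (1 - tanh u ^ 2 - sech u ^ 2) with 0 by lra. ring. ring.
  - xsub. field. nra.
  - xsub. field. nra.
  - xsub. field. nra.
Qed.

Lemma umbilic_Xs p w : frame p w -> totally_umbilic_param (Xs p w).
Proof.
  intros Hf u v.
  exists (Fr p w (1 - (sech u * sech v) ^ 2) (- (sech u * sech v * tanh u)) (- (sech u * sech v * (sech u * tanh v))),
          sech u * sech v), (sech u * sech v).
  rewrite Xu_Xs, Xv_Xs, Xuu_Xs, Xuv_Xs, Xvv_Xs, !dot4_Fr by auto.
  unfold Xs; simpl fst. rewrite Fr_dot by auto.
  repeat split; xsub; field; nra.
Qed.

Lemma cont_plus (f g : R -> R) x : continuous f x -> continuous g x -> continuous (fun y => f y + g y) x.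
Proof. intros; apply (continuous_plus f g); auto. Qed.
Lemma cont_mult (f g : R -> R) x : continuous f x -> continuous g x -> continuous (fun y => f y * g y) x.
Proof. intros; apply (continuous_mult f g); auto. Qed.
Lemma cont_pow2 (f : R -> R) x : continuous f x -> continuous (fun y => f y ^ 2) x.
Proof. intros. apply continuous_ext with (fun y => f y * f y). intros; simpl; rewrite Rmult_1_r; reflexivity. apply cont_mult; auto. Qed.
Lemma cont_gcomp (g f : R -> R) x : (forall y, continuous g y) -> continuous f x -> continuous (fun y => g (f y)) x.
Proof. intros Hg Hf. apply (continuous_comp f g); auto. Qed.
Lemma continuous_dS y : continuous dS y. Proof. apply (ex_derive_continuous dS), ex_d_dS. Qed.

Ltac cont1 := match goal with
| |- continuous (fun y => sqrt (@?f y)) _ => apply (continuous_sqrt_comp f)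
| |- continuous (fun y => sech (@?f y)) _ => apply (cont_gcomp sech f); [apply continuous_sech|]
| |- continuous (fun y => tanh (@?f y)) _ => apply (cont_gcomp tanh f); [apply continuous_tanh|]
| |- continuous (fun y => dS (@?f y)) _ => apply (cont_gcomp dS f); [apply continuous_dS|]
| |- continuous (fun y => @?f y + @?g y) _ => apply (cont_plus f g)
| |- continuous (fun y => @?f y * @?g y) _ => apply (cont_mult f g)
| |- continuous (fun y => @?f y ^ 2) _ => apply (cont_pow2 f)
| |- _ => assumption
| |- continuous (fun _ => _) _ => apply continuous_const
end.
Ltac cont := repeat cont1.

Lemma comp_d (g dg c : R -> R) r : (forall x, is_derive g x (dg x)) -> ex_derive c r ->
  is_derive (fun r => g (c r)) r (dg (c r) * Derive c r).
Proof.
  intros Hg Hc. eapply is_derive_eq. apply (is_derive_comp g c). apply Hg. apply Derive_correct; auto.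
  rsimpl. ring.
Qed.

Lemma complete_Xs p w : frame p w -> complete_param (Xs p w).
Proof.
  intros Hf c1 c2 Hc Hlim M.
  set (d1 := Derive c1). set (d2 := Derive c2).
  set (A' := fun r => dS (c1 r) * d1 r * sech (c2 r) + sech (c1 r) * (dS (c2 r) * d2 r)).
  set (B' := fun r => sech (c1 r) ^ 2 * d1 r).
  set (C' := fun r => dS (c1 r) * d1 r * tanh (c2 r) + sech (c1 r) * (sech (c2 r) ^ 2 * d2 r)).
  set (k := fun r => tanh (c1 r) * d1 r + tanh (c2 r) * d2 r).
  set (h := fun r => sqrt (A' r ^ 2 + B' r ^ 2 + C' r ^ 2 + k r ^ 2)).
  set (L := fun r => lch (c1 r) + lch (c2 r)).
  assert (HL : forall r, 0 <= r -> is_derive L r (k r)).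
  { intros r Hr. destruct (Hc r Hr) as [H1 [H2 _]]. unfold L, k.
    apply (is_derive_plus (fun r => lch (c1 r)) (fun r => lch (c2 r))).
    apply comp_d; auto. apply is_derive_lch. apply comp_d; auto. apply is_derive_lch. }
  assert (Hdv : forall r, 0 <= r -> dvec (fun s => Xs p w (c1 s) (c2 s)) r = (Fr p w (A' r) (B' r) (C' r), k r)).
  { intros r Hr. destruct (Hc r Hr) as [H1 [H2 _]].
    assert (DA : is_derive (fun s => sech (c1 s) * sech (c2 s)) r (A' r)).
    { eapply is_derive_eq. apply (is_derive_mult (fun s => sech (c1 s)) (fun s => sech (c2 s))).
      apply comp_d; auto. apply is_derive_sech. apply comp_d; auto. apply is_derive_sech.
      intros; apply Rmult_comm. unfold A', dS. rsimpl. unfold d1, d2. reflexivity. }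
    assert (DB : is_derive (fun s => tanh (c1 s)) r (B' r)).
    { eapply is_derive_eq. apply comp_d; auto. apply is_derive_tanh. auto. }
    assert (DC : is_derive (fun s => sech (c1 s) * tanh (c2 s)) r (C' r)).
    { eapply is_derive_eq. apply (is_derive_mult (fun s => sech (c1 s)) (fun s => tanh (c2 s))).
      apply comp_d; auto. apply is_derive_sech. apply comp_d; auto. apply is_derive_tanh.
      intros; apply Rmult_comm. unfold C', dS. rsimpl. unfold d1, d2. reflexivity. }
    unfold Xs.
    rewrite (dvec_Fr p w (fun s => sech (c1 s) * sech (c2 s)) (fun s => tanh (c1 s)) (fun s => sech (c1 s) * tanh (c2 s)) L).
    f_equal; [f_equal|]; apply is_derive_unique; auto.
    all: eexists; eauto. }
  assert (Hsp : forall r, 0 <= r -> sqrt (dot4 (dvec (fun s => Xs p w (c1 s) (c2 s)) r) (dvec (fun s => Xs p w (c1 s) (c2 s)) r)) = h r).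
  { intros r Hr. rewrite Hdv, dot4_Fr by auto. unfold h. f_equal. ring. }
  assert (Hch : forall r, 0 <= r -> continuous h r /\ continuous k r).
  { intros r Hr. destruct (Hc r Hr) as [H1 [H2 [H3 H4]]].
    apply ex_derive_continuous in H1. apply ex_derive_continuous in H2.
    unfold h, A', B', C', k, d1, d2. split; cont. }
  assert (Hlim' := proj2 (is_lim_spec _ _ _) Hlim). simpl in Hlim'.
  assert (Hln2 : 0 < ln 2) by (rewrite <- ln_1; apply ln_increasing; lra).
  set (K := Rabs M + Rabs (L 0) + 2 * ln 2 + 1).
  destruct (Hlim' (K ^ 2)) as [N HN].
  set (T := Rmax 0 N + 1).
  assert (HT0 : 0 <= T) by (unfold T; pose proof (Rmax_l 0 N); lra).
  assert (HTN : N < T) by (unfold T; pose proof (Rmax_r 0 N); lra).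
  exists T. split; auto.
  assert (Hint : RInt (fun r => sqrt (dot4 (dvec (fun s => Xs p w (c1 s) (c2 s)) r) (dvec (fun s => Xs p w (c1 s) (c2 s)) r))) 0 T
                 = RInt h 0 T).
  { apply RInt_ext. intros x Hx. rewrite Rmin_left, Rmax_right in Hx by lra. apply Hsp. lra. }
  rewrite Hint.
  assert (Hk : RInt k 0 T = L T - L 0).
  { assert (Hi : is_RInt k 0 T (minus (L T) (L 0))).
    { apply (is_RInt_derive L k 0 T).
      intros x Hx. rewrite Rmin_left, Rmax_right in Hx by lra. apply HL; lra.
      intros x Hx. rewrite Rmin_left, Rmax_right in Hx by lra. apply Hch; lra. }
    rewrite (is_RInt_unique _ _ _ _ Hi). rsimpl. ring. }
  assert (Hle : RInt k 0 T <= RInt h 0 T).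
  { apply RInt_le; auto.
    apply (ex_RInt_continuous (V := R_CompleteNormedModule)). intros z Hz. rewrite Rmin_left, Rmax_right in Hz by lra. apply Hch; lra.
    apply (ex_RInt_continuous (V := R_CompleteNormedModule)). intros z Hz. rewrite Rmin_left, Rmax_right in Hz by lra. apply Hch; lra.
    intros x _. unfold h. apply Rle_trans with (Rabs (k x)). apply Rle_abs.
    rewrite <- sqrt_Rsqr_abs. apply sqrt_le_1_alt. unfold Rsqr.
    pose proof (pow2_ge_0 (A' x)). pose proof (pow2_ge_0 (B' x)). pose proof (pow2_ge_0 (C' x)). nra. }
  assert (HLT : K - 2 * ln 2 < L T).
  { specialize (HN T HTN). unfold L.
    pose proof (lch_ge (c1 T)). pose proof (lch_ge (c2 T)).
    assert (K < Rabs (c1 T) + Rabs (c2 T)).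
    { destruct (Rlt_or_le K (Rabs (c1 T) + Rabs (c2 T))); auto.
      exfalso. assert (0 <= K) by (unfold K; pose proof (Rabs_pos M); pose proof (Rabs_pos (L 0)); lra).
      pose proof (Rabs_pos (c1 T)). pose proof (Rabs_pos (c2 T)).
      assert (c1 T ^ 2 + c2 T ^ 2 <= K ^ 2).
      { rewrite <- (pow2_abs (c1 T)), <- (pow2_abs (c2 T)). nra. }
      lra. }
    lra. }
  unfold K in HLT. pose proof (Rle_abs M). pose proof (Rle_abs (L 0)). lra.
Qed.

Lemma PSeries_R a x : PSeries a x = Series (fun n => a n * x ^ n).
Proof. unfold PSeries. apply Series_ext. intros n. rsimpl. rewrite <- pow_n_pow. ring. Qed.

Lemma bnd_lim0 (u : nat -> R) : is_lim_seq u 0 -> exists M, forall n, Rabs (u n) <= M.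
Proof.
  intros H. apply is_lim_seq_spec in H. destruct (H (mkposreal 1 Rlt_0_1)) as [N HN]. simpl in HN.
  assert (Hb : forall N, exists M0, forall n, (n <= N)%nat -> Rabs (u n) <= M0).
  { induction N0 as [|N0 [M0 HM0]].
    - exists (Rabs (u 0%nat)). intros n Hn. assert (n = 0%nat) by lia. subst; lra.
    - exists (Rmax M0 (Rabs (u (S N0)))). intros n Hn.
      destruct (Nat.le_gt_cases n N0). eapply Rle_trans. apply HM0; auto. apply Rmax_l.
      assert (n = S N0) by lia. subst. apply Rmax_r. }
  destruct (Hb N) as [M0 HM0]. exists (Rmax M0 1). intros n.
  destruct (Nat.le_gt_cases n N). eapply Rle_trans. apply HM0; auto. apply Rmax_l.
  specialize (HN n ltac:(lia)). rewrite Rminus_0_r in HN. eapply Rle_trans. 2: apply Rmax_r. lra.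
Qed.

Lemma radius_pt c y : 0 <= y -> ex_pseries c y -> Rbar_le y (CV_radius c).
Proof.
  intros Hy He. unfold ex_pseries in He. apply ex_series_lim_0 in He.
  apply bnd_lim0 in He. destruct He as [M HM].
  destruct (CV_radius_bounded c) as [Hub _]. apply Hub. exists M. intros n.
  specialize (HM n). rewrite pow_n_pow in HM. rsimpl. rewrite Rmult_comm. auto.
Qed.

Lemma radius_ge c r : (forall y, 0 <= y < r -> ex_pseries c y) -> Rbar_le r (CV_radius c).
Proof.
  intros H. apply Rbar_not_lt_le. intros Hlt.
  pose proof (CV_radius_ge_0 c).
  destruct (CV_radius c) as [R0| |] eqn:E; simpl in *; try tauto.
  assert (Hy := radius_pt c ((R0 + r) / 2) ltac:(lra) (H ((R0 + r) / 2) ltac:(lra))).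
  rewrite E in Hy. simpl in Hy. lra.
Qed.

Lemma lt_rad a (r y : R) : Rbar_le r (CV_radius a) -> Rabs y < r -> Rbar_lt (Rabs y) (CV_radius a).
Proof. intros H1 H2. eapply Rbar_lt_le_trans. 2: apply H1. simpl. auto. Qed.

Definition an1 (f : R -> R) := forall x0, exists (a : nat -> R) (r : R), 0 < r /\ Rbar_le r (CV_radius a) /\
  forall x, Rabs (x - x0) < r -> f x = PSeries a (x - x0).

Lemma an1_ext f g : (forall x, f x = g x) -> an1 f -> an1 g.
Proof.
  intros E H x0. destruct (H x0) as [a [r [Hr [Hc Hf]]]]. exists a, r. split; auto. split; auto.
  intros x Hx. rewrite <- E. auto.
Qed.

Definition delta0 (c : R) (n : nat) : R := match n with O => c | _ => 0 end.

Lemma is_series_delta0 c : is_series (delta0 c) c.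
Proof.
  change (is_lim_seq (sum_n (delta0 c)) c). apply (is_lim_seq_ext (fun _ => c)).
  intros n. induction n. rewrite sum_O. auto. rewrite sum_Sn, <- IHn. simpl. rsimpl. ring.
  apply is_lim_seq_const.
Qed.

Lemma PSeries_delta0 c y : PSeries (delta0 c) y = c.
Proof.
  rewrite PSeries_R. rewrite (Series_ext _ (delta0 c)). apply is_series_unique, is_series_delta0.
  intros [|n]; simpl; ring.
Qed.

Lemma ex_pseries_delta0 c y : ex_pseries (delta0 c) y.
Proof.
  unfold ex_pseries. eexists. eapply is_series_ext. 2: apply (is_series_delta0 c).
  intros [|n]; simpl; rsimpl; ring.
Qed.

Lemma an1_const c : an1 (fun _ => c).
Proof.
  intros x0. exists (delta0 c), 1. split; [lra|]. split.
  apply radius_ge. intros; apply ex_pseries_delta0.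
  intros. rewrite PSeries_delta0. auto.
Qed.

Lemma an1_plus f g : an1 f -> an1 g -> an1 (fun x => f x + g x).
Proof.
  intros Hf Hg x0. destruct (Hf x0) as [a [r1 [Hr1 [Hc1 Hf1]]]]. destruct (Hg x0) as [b [r2 [Hr2 [Hc2 Hg2]]]].
  exists (PS_plus a b), (Rmin r1 r2). split. apply Rmin_glb_lt; auto. split.
  - apply radius_ge. intros y Hy. apply ex_pseries_plus; apply CV_radius_inside.
    apply (lt_rad a r1). auto. rewrite Rabs_pos_eq; try lra. pose proof (Rmin_l r1 r2). lra.
    apply (lt_rad b r2). auto. rewrite Rabs_pos_eq; try lra. pose proof (Rmin_r r1 r2). lra.
  - intros x Hx. pose proof (Rmin_l r1 r2). pose proof (Rmin_r r1 r2).
    rewrite PSeries_plus. rewrite Hf1, Hg2; auto; lra.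
    apply CV_radius_inside. apply (lt_rad a r1); auto; lra.
    apply CV_radius_inside. apply (lt_rad b r2); auto; lra.
Qed.

Lemma an1_mult f g : an1 f -> an1 g -> an1 (fun x => f x * g x).
Proof.
  intros Hf Hg x0. destruct (Hf x0) as [a [r1 [Hr1 [Hc1 Hf1]]]]. destruct (Hg x0) as [b [r2 [Hr2 [Hc2 Hg2]]]].
  exists (PS_mult a b), (Rmin r1 r2). split. apply Rmin_glb_lt; auto. split.
  - apply radius_ge. intros y Hy. apply ex_pseries_mult.
    apply (lt_rad a r1). auto. rewrite Rabs_pos_eq; try lra. pose proof (Rmin_l r1 r2). lra.
    apply (lt_rad b r2). auto. rewrite Rabs_pos_eq; try lra. pose proof (Rmin_r r1 r2). lra.
  - intros x Hx. pose proof (Rmin_l r1 r2). pose proof (Rmin_r r1 r2).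
    rewrite PSeries_mult. rewrite Hf1, Hg2; auto; lra.
    apply (lt_rad a r1); auto; lra.
    apply (lt_rad b r2); auto; lra.
Qed.

Lemma an1_expc c k : c <> 0 -> k <> 0 -> an1 (fun x => c * exp (k * x)).
Proof.
  intros Hc Hk x0.
  set (a := fun n => c * exp (k * x0) * k ^ n / INR (Factorial.fact n)).
  exists a, 1. split; [lra|]. split.
  - assert (CV_radius a = p_infty).
    { apply CV_radius_infinite_DAlembert.
      intros n. unfold a. pose proof (exp_pos (k * x0)). pose proof (pow_nonzero k n Hk).
      pose proof (INR_fact_neq_0 n). unfold Rdiv.
      repeat apply Rmult_integral_contrapositive_currified; auto; try lra. apply Rinv_neq_0_compat; auto.
      apply is_lim_seq_ext with (fun n => Rabs k / INR (S n)).
      intros n. unfold a. rewrite fact_simpl, mult_INR. simpl pow.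
      pose proof (exp_pos (k * x0)). pose proof (pow_nonzero k n Hk).
      pose proof (INR_fact_neq_0 n). pose proof (pos_INR n).
      replace (c * exp (k * x0) * (k * k ^ n) / (INR (S n) * INR (Factorial.fact n)) / (c * exp (k * x0) * k ^ n / INR (Factorial.fact n)))
        with (k / INR (S n)) by (rewrite S_INR; field; repeat split; lra).
      rewrite Rabs_div. rewrite (Rabs_pos_eq (INR (S n))). auto. apply pos_INR.
      rewrite S_INR; lra.
      replace 0 with (Rabs k * 0) by ring.
      apply (is_lim_seq_scal_l (fun n => / INR (S n)) (Rabs k) 0).
      apply (is_lim_seq_incr_1 (fun n => / INR n)).
      replace (Finite 0) with (Rbar_inv p_infty) by auto.
      apply is_lim_seq_inv. apply is_lim_seq_INR. simpl; congruence. }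
    rewrite H. simpl. auto.
  - intros x _. rewrite PSeries_R.
    replace (k * x) with (k * x0 + k * (x - x0)) by ring. rewrite exp_plus, (exp_Reals (k * (x - x0))), PSeries_R.
    rewrite <- Rmult_assoc, <- Series_scal_l. apply Series_ext. intros n. unfold a.
    rewrite Rpow_mult_distr. field. apply INR_fact_neq_0.
Qed.

Lemma an1_cosh : an1 cosh.
Proof.
  apply an1_ext with (fun x => / 2 * exp (1 * x) + / 2 * exp (-1 * x)).
  intros; unfold cosh. rewrite Rmult_1_l. replace (-1 * x) with (- x) by ring. field.
  apply an1_plus; apply an1_expc; lra.
Qed.

Lemma an1_sinh : an1 sinh.
Proof.
  apply an1_ext with (fun x => / 2 * exp (1 * x) + - / 2 * exp (-1 * x)).
  intros; unfold sinh. rewrite Rmult_1_l. replace (-1 * x) with (- x) by ring. field.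
  apply an1_plus; apply an1_expc; lra.
Qed.

Fixpoint bb (a : nat -> R) (n : nat) : nat -> R := match n with
| O => fun _ => / a O
| S m => fun k => if Nat.leb k m then bb a m k else - / a O * sum_f_R0 (fun j => a (S j) * bb a m (m - j)) m
end.
Definition binv a n := bb a n n.

Lemma bb_stable a m k : (k <= m)%nat -> bb a m k = binv a k.
Proof.
  revert k. induction m; intros k Hk.
  - assert (k = 0%nat) by lia. subst. reflexivity.
  - destruct (Nat.leb k m) eqn:E.
    + simpl. rewrite E. apply Nat.leb_le in E. auto.
    + apply Nat.leb_gt in E. assert (k = S m) by lia. subst. reflexivity.
Qed.

Lemma binv_S a m : binv a (S m) = - / a O * sum_f_R0 (fun j => a (S j) * binv a (m - j)) m.
Proof.
  unfold binv at 1. simpl. replace (Nat.leb m m) with true by (symmetry; apply Nat.leb_le; lia).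
  replace (match m with O => false | S m' => Nat.leb m m' end) with false.
  2: { symmetry. destruct m. auto. apply Nat.leb_gt. lia. }
  f_equal. apply sum_eq. intros i Hi. rewrite bb_stable; auto. lia.
Qed.

Lemma PS_mult_binv a : a O <> 0 -> forall n, PS_mult a (binv a) n = delta0 1 n.
Proof.
  intros Ha [|m].
  - unfold PS_mult. simpl. unfold binv. simpl. field. auto.
  - unfold PS_mult. rewrite decomp_sum by lia. simpl pred. rewrite Nat.sub_0_r.
    rewrite binv_S. simpl delta0.
    replace (sum_f_R0 (fun i => a (S i) * binv a (S m - S i)) m) with (sum_f_R0 (fun j => a (S j) * binv a (m - j)) m).
    field. auto. apply sum_eq. intros; reflexivity.
Qed.

Lemma geom_bound q m : 1 < q -> sum_f_R0 (fun j => (/ q) ^ S j) m <= / (q - 1).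
Proof.
  intros Hq.
  assert (E : sum_f_R0 (fun j => (/ q) ^ S j) m = / q * sum_f_R0 (fun j => (/ q) ^ j) m).
  { rewrite scal_sum. apply sum_eq. intros; simpl; ring. }
  rewrite E, tech3.
  2: { intros H. assert (q = 1). { rewrite <- (Rinv_inv q), H. apply Rinv_1. } lra. }
  assert (0 < / q < 1). { split. apply Rinv_0_lt_compat; lra. rewrite <- Rinv_1. apply Rinv_lt_contravar; lra. }
  assert (0 <= (/ q) ^ S m) by (apply pow_le; lra).
  replace (/ (q - 1)) with (/ q / (1 - / q)) by (field; lra).
  unfold Rdiv. apply Rmult_le_compat_l. lra.
  rewrite <- (Rmult_1_l (/ (1 - / q))) at 2.
  apply Rmult_le_compat_r. left; apply Rinv_0_lt_compat; lra. lra.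
Qed.

Lemma binv_bound a K rho : a O <> 0 -> 0 < rho -> 0 <= K -> (forall n, Rabs (a n) * rho ^ n <= K) ->
  forall n, Rabs (binv a n) <= / Rabs (a O) * ((2 + K * / Rabs (a O)) / rho) ^ n.
Proof.
  intros Ha Hr HK Hb.
  set (B := / Rabs (a O)). set (q := 2 + K * B). set (D := q / rho).
  assert (HB : 0 < B) by (apply Rinv_0_lt_compat; apply Rabs_pos_lt; auto).
  assert (Hq : 2 <= q) by (unfold q; pose proof (Rmult_le_pos K B HK (Rlt_le _ _ HB)); lra).
  assert (HD : 0 < D) by (unfold D; apply Rdiv_lt_0_compat; lra).
  assert (Hstrong : forall n k, (k <= n)%nat -> Rabs (binv a k) <= B * D ^ k).
  { induction n; intros k Hk.
    - assert (k = 0%nat) by lia. subst. unfold binv. simpl. rewrite Rabs_inv. unfold B. lra.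
    - destruct (Nat.le_gt_cases k n). apply IHn; auto.
      assert (k = S n) by lia. subst k. clear H.
      rewrite binv_S, Rabs_mult, Rabs_Ropp, Rabs_inv. fold B.
      assert (Hterm : forall j, (j <= n)%nat -> Rabs (a (S j) * binv a (n - j)) <= K * B * D ^ S n * (/ q) ^ S j).
      { intros j Hj. rewrite Rabs_mult.
        assert (H1 : Rabs (a (S j)) <= K / rho ^ S j).
        { specialize (Hb (S j)). pose proof (pow_lt rho (S j) Hr).
          apply Rmult_le_reg_r with (rho ^ S j); auto. field_simplify; lra. }
        assert (H2 : Rabs (binv a (n - j)) <= B * D ^ (n - j)) by (apply IHn; lia).
        eapply Rle_trans. apply Rmult_le_compat; try apply Rabs_pos; eauto.
        right. replace (S n) with ((n - j) + S j)%nat by lia. rewrite pow_add.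
        rewrite <- Rinv_pow by lra. unfold q. replace (2 + K * B) with (rho * D) by (unfold D, q; field; lra).
        rewrite Rpow_mult_distr. field. split; apply pow_nonzero; lra. }
      eapply Rle_trans. apply Rmult_le_compat_l. lra.
      eapply Rle_trans. apply sum_f_R0_triangle. apply sum_Rle. apply Hterm.
      replace (sum_f_R0 (fun j => K * B * D ^ S n * (/ q) ^ S j) n) with (K * B * D ^ S n * sum_f_R0 (fun j => (/ q) ^ S j) n)
        by (rewrite scal_sum; apply sum_eq; intros; ring).
      pose proof (geom_bound q n ltac:(lra)).
      assert (0 <= D ^ S n) by (apply pow_le; lra).
      assert (K * B * / (q - 1) <= 1).
      { apply Rmult_le_reg_r with (q - 1). lra. rewrite Rmult_assoc, Rinv_l by lra. unfold q. lra. }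
      assert (0 <= K * B) by (apply Rmult_le_pos; lra).
      assert (K * B * D ^ S n * sum_f_R0 (fun i : nat => (/ q) ^ S i) n <= D ^ S n).
      { apply Rle_trans with (K * B * D ^ S n * / (q - 1)).
        apply Rmult_le_compat_l. apply Rmult_le_pos; lra. auto.
        replace (K * B * D ^ S n * / (q - 1)) with ((K * B * / (q - 1)) * D ^ S n) by ring.
        rewrite <- (Rmult_1_l (D ^ S n)) at 2. apply Rmult_le_compat_r; lra. }
      apply Rmult_le_compat_l; lra. }
  intros n. apply Hstrong with n. lia.
Qed.

Lemma an1_inv f : an1 f -> (forall x, f x <> 0) -> an1 (fun x => / f x).
Proof.
  intros Hf Hnz x0. destruct (Hf x0) as [a [r [Hr [Hc Hfa]]]].
  assert (Ha0 : a O = f x0). { rewrite Hfa. rewrite Rminus_eq_0, PSeries_0. auto. rewrite Rminus_eq_0, Rabs_R0; auto. }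
  assert (Ha : a O <> 0) by (rewrite Ha0; auto).
  set (rho := r / 2).
  assert (Hrho : 0 < rho) by (unfold rho; lra).
  assert (Hd := CV_disk_inside a rho (lt_rad a r rho Hc ltac:(rewrite Rabs_pos_eq; unfold rho; lra))).
  apply ex_series_lim_0, bnd_lim0 in Hd. destruct Hd as [K HK].
  assert (HK0 : 0 <= K) by (eapply Rle_trans; [apply Rabs_pos | apply (HK O)]).
  assert (Hb : forall n, Rabs (a n) * rho ^ n <= K).
  { intros n. specialize (HK n). rewrite Rabs_Rabsolu, Rabs_mult, (Rabs_pos_eq (rho ^ n)) in HK; auto.
    apply pow_le; lra. }
  set (B := / Rabs (a O)). set (D := (2 + K * B) / rho).
  assert (HB : 0 < B) by (apply Rinv_0_lt_compat; apply Rabs_pos_lt; auto).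
  assert (HD : 0 < D) by (unfold D; apply Rdiv_lt_0_compat; try lra; pose proof (Rmult_le_pos K B HK0 (Rlt_le _ _ HB)); lra).
  assert (Hbb := binv_bound a K rho Ha Hrho HK0 Hb). fold B in Hbb. fold D in Hbb.
  assert (Hcb : Rbar_le (/ D) (CV_radius (binv a))).
  { destruct (CV_radius_bounded (binv a)) as [Hub _]. apply Hub. exists B. intros n.
    rewrite Rabs_mult. eapply Rle_trans. apply Rmult_le_compat_r. apply Rabs_pos. apply Hbb.
    rewrite <- RPow_abs, Rabs_pos_eq by (left; apply Rinv_0_lt_compat; auto).
    rewrite Rmult_assoc, <- Rpow_mult_distr, Rinv_r, pow1 by lra. lra. }
  exists (binv a), (Rmin r (/ D)). split. apply Rmin_glb_lt; auto. apply Rinv_0_lt_compat; auto.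
  split.
  - eapply Rbar_le_trans. 2: apply Hcb. simpl. apply Rmin_r.
  - intros x Hx. pose proof (Rmin_l r (/ D)). pose proof (Rmin_r r (/ D)).
    assert (E := PSeries_mult a (binv a) (x - x0) (lt_rad a r (x - x0) Hc ltac:(lra)) (lt_rad _ (/ D) (x - x0) Hcb ltac:(lra))).
    rewrite (PSeries_ext _ (delta0 1)) in E by (apply PS_mult_binv; auto).
    rewrite PSeries_delta0, <- Hfa in E by lra.
    assert (f x <> 0) by auto. field_simplify_eq; auto.
Qed.

Lemma PS_derive_Int a n : PS_derive (PS_Int a) n = a n.
Proof. unfold PS_derive, PS_Int. field. apply not_0_INR. lia. Qed.

Lemma an1_prim f g : (forall x, is_derive f x (g x)) -> an1 g -> an1 f.
Proof.
  intros Hd Hg x0. destruct (Hg x0) as [a [r [Hr [Hc Hga]]]].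
  assert (HcI : Rbar_le r (CV_radius (PS_Int a))) by (rewrite CV_radius_Int; auto).
  exists (PS_plus (delta0 (f x0)) (PS_Int a)), r. split; auto. split.
  - apply radius_ge. intros y Hy. apply ex_pseries_plus. apply ex_pseries_delta0.
    apply CV_radius_inside. apply (lt_rad _ r); auto. rewrite Rabs_pos_eq; lra.
  - intros x Hx. rewrite PSeries_plus. 2: apply ex_pseries_delta0.
    2: apply CV_radius_inside; apply (lt_rad _ r); auto.
    rewrite PSeries_delta0.
    set (h := fun t => f t - PSeries (PS_Int a) (t - x0)).
    assert (Hh : forall t, Rabs (t - x0) < r -> is_derive h t 0).
    { intros t Ht. unfold h. eapply is_derive_eq.
      apply @is_derive_minus. apply Hd.
      apply (is_derive_comp (PSeries (PS_Int a)) (fun t => t - x0)).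
      apply is_derive_PSeries. apply (lt_rad _ r); auto.
      auto_derive; auto.
      rsimpl. rewrite (PSeries_ext _ a) by apply PS_derive_Int. rewrite <- Hga by auto. ring. }
    destruct (MVT_gen h x0 x (fun _ => 0)) as [c [Hc1 Hc2]].
    + intros t Ht. apply Hh. apply Rabs_lt_between'.
      pose proof (Rmin_l x0 x). pose proof (Rmin_r x0 x). pose proof (Rmax_l x0 x). pose proof (Rmax_r x0 x).
      apply Rabs_lt_between' in Hx. unfold Rmin, Rmax in *. destruct (Rle_dec x0 x); lra.
    + intros t Ht. apply continuity_pt_filterlim. apply (ex_derive_continuous h). eexists. apply Hh.
      apply Rabs_lt_between'.
      apply Rabs_lt_between' in Hx. unfold Rmin, Rmax in *. destruct (Rle_dec x0 x); lra.
    + unfold h in Hc2. rewrite Rminus_eq_0, PSeries_0 in Hc2. unfold PS_Int at 2 in Hc2. lra.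
Qed.

Lemma an1_sech : an1 sech.
Proof.
  unfold sech. apply (an1_inv cosh an1_cosh). intros x. pose proof (cosh_pos x). lra.
Qed.

Lemma an1_tanh : an1 tanh.
Proof.
  apply an1_ext with (fun x => sinh x * sech x). intros; unfold tanh, sech; field.
  pose proof (cosh_pos x); lra.
  apply an1_mult. apply an1_sinh. apply an1_sech.
Qed.

Lemma an1_lch : an1 lch.
Proof. apply (an1_prim lch tanh). apply is_derive_lch. apply an1_tanh. Qed.

Lemma exs_scal_l c (a : nat -> R) : ex_series a -> ex_series (fun n => c * a n).
Proof. intros H. apply ex_series_ext with (fun n => a n * c). intros; apply Rmult_comm. apply ex_series_scal_r; auto. Qed.

Lemma exs_plus (a b : nat -> R) : ex_series a -> ex_series b -> ex_series (fun n => a n + b n).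
Proof. intros Ha Hb. apply (ex_series_plus a b); auto. Qed.

Lemma exs_le (a b : nat -> R) : (forall n, Rabs (a n) <= b n) -> ex_series b -> ex_series a.
Proof. intros H Hb. apply (ex_series_le a b); auto. Qed.

Lemma an2_prod g h : an1 g -> an1 h -> analytic2 (fun u v => g u * h v).
Proof.
  intros Hg Hh u0 v0. destruct (Hg u0) as [a [r1 [Hr1 [Hc1 Hga]]]]. destruct (Hh v0) as [b [r2 [Hr2 [Hc2 Hhb]]]].
  exists (fun m n => a m * b n), (Rmin r1 r2). split. apply Rmin_glb_lt; auto.
  intros u v Hu Hv. pose proof (Rmin_l r1 r2). pose proof (Rmin_r r1 r2).
  set (x := u - u0) in *. set (y := v - v0) in *.
  assert (Ea := CV_disk_inside a x (lt_rad a r1 x Hc1 ltac:(lra))).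
  assert (Eb := CV_disk_inside b y (lt_rad b r2 y Hc2 ltac:(lra))).
  assert (Hab : forall m n, Rabs (a m * b n * x ^ m * y ^ n) = Rabs (a m * x ^ m) * Rabs (b n * y ^ n)).
  { intros. rewrite <- Rabs_mult. f_equal. ring. }
  split; [|split].
  - intros m. apply ex_series_ext with (fun n => Rabs (a m * x ^ m) * Rabs (b n * y ^ n)).
    intros; rewrite Hab; auto. apply exs_scal_l; auto.
  - apply ex_series_ext with (fun m => Rabs (a m * x ^ m) * Series (fun n => Rabs (b n * y ^ n))).
    intros m. rewrite <- Series_scal_l. apply Series_ext. intros; rewrite Hab; auto.
    apply ex_series_scal_r; auto.
  - rewrite Hga, Hhb by (fold x y; lra). fold x y. rewrite !PSeries_R.
    rewrite <- Series_scal_r. apply Series_ext. intros m.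
    rewrite <- Series_scal_l. apply Series_ext. intros n. ring.
Qed.

Lemma an2_ext f g : (forall u v, f u v = g u v) -> analytic2 f -> analytic2 g.
Proof.
  intros E H u0 v0. destruct (H u0 v0) as [c [r [Hr Hf]]]. exists c, r. split; auto.
  intros u v Hu Hv. destruct (Hf u v Hu Hv) as [H1 [H2 H3]]. split; auto. split; auto. rewrite <- E; auto.
Qed.

Lemma series_abs_abs (d : nat -> R) : ex_series (fun n => Rabs (d n)) ->
  Rabs (Series (fun n => Rabs (d n))) <= Series (fun n => Rabs (d n)).
Proof.
  intros H. eapply Rle_trans. apply Series_Rabs. apply ex_series_ext with (fun n => Rabs (d n)); auto.
  intros; rewrite Rabs_Rabsolu; auto. right. apply Series_ext. intros; apply Rabs_Rabsolu.
Qed.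

Lemma an2_plus f g : analytic2 f -> analytic2 g -> analytic2 (fun u v => f u v + g u v).
Proof.
  intros Hf Hg u0 v0. destruct (Hf u0 v0) as [c1 [r1 [Hr1 H1]]]. destruct (Hg u0 v0) as [c2 [r2 [Hr2 H2]]].
  exists (fun m n => c1 m n + c2 m n), (Rmin r1 r2). split. apply Rmin_glb_lt; auto.
  intros u v Hu Hv. pose proof (Rmin_l r1 r2). pose proof (Rmin_r r1 r2).
  destruct (H1 u v ltac:(lra) ltac:(lra)) as [A1 [B1 E1]].
  destruct (H2 u v ltac:(lra) ltac:(lra)) as [A2 [B2 E2]].
  set (x := u - u0) in *. set (y := v - v0) in *.
  assert (Htri : forall m n, Rabs ((c1 m n + c2 m n) * x ^ m * y ^ n) <= Rabs (c1 m n * x ^ m * y ^ n) + Rabs (c2 m n * x ^ m * y ^ n)).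
  { intros. replace ((c1 m n + c2 m n) * x ^ m * y ^ n) with (c1 m n * x ^ m * y ^ n + c2 m n * x ^ m * y ^ n) by ring.
    apply Rabs_triang. }
  assert (A : forall m, ex_series (fun n => Rabs ((c1 m n + c2 m n) * x ^ m * y ^ n))).
  { intros m. apply exs_le with (fun n => Rabs (c1 m n * x ^ m * y ^ n) + Rabs (c2 m n * x ^ m * y ^ n)).
    intros n. rewrite Rabs_Rabsolu. apply Htri. apply exs_plus; auto. }
  split; [auto|split].
  - apply exs_le with (fun m => Series (fun n => Rabs (c1 m n * x ^ m * y ^ n)) + Series (fun n => Rabs (c2 m n * x ^ m * y ^ n))).
    2: apply exs_plus; auto.
    intros m. eapply Rle_trans. apply series_abs_abs. auto.
    rewrite <- Series_plus by auto. apply Series_le. intros n. split. apply Rabs_pos. apply Htri.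
    apply exs_plus; auto.
  - rewrite E1, E2.
    assert (C1 : forall m, ex_series (fun n => c1 m n * x ^ m * y ^ n)) by (intros; apply ex_series_Rabs; auto).
    assert (C2 : forall m, ex_series (fun n => c2 m n * x ^ m * y ^ n)) by (intros; apply ex_series_Rabs; auto).
    assert (D1 : ex_series (fun m => Series (fun n => c1 m n * x ^ m * y ^ n))).
    { apply exs_le with (fun m => Series (fun n => Rabs (c1 m n * x ^ m * y ^ n))); auto.
      intros m. apply Series_Rabs; auto. }
    assert (D2 : ex_series (fun m => Series (fun n => c2 m n * x ^ m * y ^ n))).
    { apply exs_le with (fun m => Series (fun n => Rabs (c2 m n * x ^ m * y ^ n))); auto.
      intros m. apply Series_Rabs; auto. }
    rewrite <- Series_plus by auto. apply Series_ext. intros m.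
    rewrite <- Series_plus by auto. apply Series_ext. intros n. ring.
Qed.

Lemma an1_cmul c f : an1 f -> an1 (fun x => f x * c).
Proof. intros H. apply an1_mult; auto. apply an1_const. Qed.

Lemma analytic_Xs p w : analytic_param (Xs p w).
Proof.
  intros i Hi. destruct (Nat.lt_ge_cases i 3) as [H3|H3].
  - apply an2_ext with (fun u v => (sech u * c3 i p) * sech v + (tanh u * c3 i w) * 1 + (sech u * c3 i (cross3 p w)) * tanh v).
    { intros u v. unfold Xs. rewrite coord_Fr by auto. ring. }
    apply an2_plus. apply an2_plus.
    + apply an2_prod. apply an1_cmul, an1_sech. apply an1_sech.
    + apply an2_prod. apply an1_cmul, an1_tanh. apply an1_const.
    + apply an2_prod. apply an1_cmul, an1_sech. apply an1_tanh.
  - assert (i = 3)%nat by lia. subst i.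
    apply an2_ext with (fun u v => lch u * 1 + 1 * lch v).
    { intros u v. unfold Xs. destruct (Fr p w (sech u * sech v) (tanh u) (sech u * tanh v)) as [[? ?] ?]. simpl. ring. }
    apply an2_plus; apply an2_prod; try apply an1_lch; apply an1_const.
Qed.

Theorem lemma3p4 (p : V3) (gam : R -> V3) (rho : R -> R) :
  on_sphere p -> unit_speed_great_circle gam -> gam 0 = p ->
  is_rho_sol 1 rho ->
  (* explicit formulas *)
  (forall s, rho s = PI / 2 - 2 * atan (exp (- s))) /\
  (forall s, t_fun 1 rho s = ln (cosh s)) /\
  (forall s, - (PI / 2) < rho s < PI / 2) /\
  (* alpha_1 is the graph t = -log cos rho, rho in ]-pi/2, pi/2[ *)
  (forall r t, (exists s, rho s = r /\ t_fun 1 rho s = t) <->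
               (- (PI / 2) < r < PI / 2 /\ t = - ln (cos r))) /\
  (* complete: arc-length parametrized (metric d rho^2 + dt^2) on all of R *)
  (forall s, ex_derive rho s /\ ex_derive (t_fun 1 rho) s /\
             (Derive rho s) ^ 2 + (Derive (t_fun 1 rho) s) ^ 2 = 1) /\
  (* open: not a closed (compact) curve *)
  (forall M, exists s, M < Rabs (t_fun 1 rho s)) /\
  (* embedded in Gamma x R *)
  (forall s s', cyl_curve gam rho (t_fun 1 rho) s = cyl_curve gam rho (t_fun 1 rho) s' -> s = s') /\
  (forall (sn : nat -> R) (s : R),
      seq_cv4 (fun n => cyl_curve gam rho (t_fun 1 rho) (sn n)) (cyl_curve gam rho (t_fun 1 rho) s) ->
      is_lim_seq sn (Finite s)) /\
  (* invariant under (rho, t) |-> (-rho, t) *)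
  (forall s, exists s', rho s' = - rho s /\ t_fun 1 rho s' = t_fun 1 rho s) /\
  (* the surface S(1) *)
  (forall x, rotational_surface p gam rho (t_fun 1 rho) x -> in_S2xR x) /\
  closed4 (rotational_surface p gam rho (t_fun 1 rho)) /\
  exists X : R -> R -> P4,
    homeo_onto X (rotational_surface p gam rho (t_fun 1 rho)) /\
    analytic_param X /\ regular_param X /\
    complete_param X /\ totally_umbilic_param X.
Proof.
  intros Hp Hgam H0 Hrho.
  destruct (gam_frame p gam Hp Hgam H0) as [w [Hf Hg]].
  assert (Et : t_fun 1 rho = lch) by (apply functional_extensionality; apply t_eq; auto).
  assert (Er : rho = phi) by (apply functional_extensionality; apply rho_eq; auto).
  rewrite Et. subst rho.
  split; [intros; reflexivity|].
  split; [intros; reflexivity|].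
  split; [apply phi_bound|].
  split; [apply graph_char|].
  split; [apply unit_speed|].
  split; [apply curve_open|].
  split; [intros s s'; apply (curve_inj p w gam); auto|].
  split; [intros sn s; apply (curve_proper p w gam); auto|].
  split; [apply curve_sym|].
  split; [intros x Hx; apply (charS p w gam x Hf Hg) in Hx; destruct Hx; auto|].
  split.
  { intros x l Hx Hl. apply (charS p w gam l Hf Hg).
    apply (closed_inS p w x l Hf); auto. intros n. apply (charS p w gam (x n) Hf Hg); auto. }
  exists (Xs p w). split; [|split; [|split; [|split]]].
  - split; [|split; [|split]].
    + intros x. rewrite (charS p w gam x Hf Hg). split.
      * intros Hx. apply inS_Xs; auto.
      * intros [u [v ->]]. apply Xs_inS; auto.
    + intros u v u' v'. apply Xs_inj; auto.
    + intros un vn u v Hu Hv. apply Xs_cont; auto.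
    + intros un vn u v. apply Xs_cont_inv; auto.
  - apply analytic_Xs.
  - apply regular_Xs; auto.
  - apply complete_Xs; auto.
  - apply umbilic_Xs; auto.
Qed.
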